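(* Let $(M,F)$ be a locally Minkowski space and fix a chart in which $g_{ij}=g_{ij}(y)$. Let $c(s)=(x^i(s))$ be a unit speed curve, $y^i=\dot x^i$, $\tau^i=\frac{dy^i}{ds}$, and $\frac{D\tau^i}{ds}:=\frac{d\tau^i}{ds}+C^i_{\ hk}(y)\tau^h\tau^k$. Then $c$ is biharmonic if and only if there exist constants $\lambda_1,\dots,\lambda_n$ such that $$g_{ij}(y(s))\,\frac{D\tau^j}{ds}=\lambda_i\qquad\text{for all }s,\ i=1,\dots,n.$$
   Context: A Finsler structure on $M$ is $F:TM\to\mathbb R$, smooth for $y\neq0$, continuous at $y=0$, positively 1-homogeneous in $y$, with metric tensor $g_{ij}(x,y)=\tfrac12\partial^2F^2/\partial y^i\partial y^j$ positive definite. $(M,F)$ is locally Minkowski if around every point there is a chart in which $g_{ij}$ depends only on $y$; in such a chart the adapted frame is $\delta_i=\partial/\partial x^i$, $\dot\partial_i=\partial/\partial y^i$, and the Cartan connection $D$ has $D_{\delta_k}\delta_j=0$, $D_{\delta_k}\dot\partial_j=0$, $D_{\dot\partial_k}\delta_j=C^i_{jk}\delta_i$, $D_{\dot\partial_k}\dot\partial_j=C^i_{jk}\dot\partial_i$, with $C^i_{jk}=\tfrac12g^{ih}\partial g_{hj}/\partial y^k$. For a unit speed curve $c$ ($F(x,\dot x)=1$) with lift $c'=(x,\dot x)$, $T=\dot x^i\delta_i$; $D_{\partial_s}$ is the covariant derivative along $c'$ induced by $D$ with reference vector $y=\dot x$ (so $D_{\partial_s}T=\tau^i\delta_i$ with $\tau^i=d\dot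 x^i/ds$); $\langle X,Y\rangle=g_{ij}X^iY^j$. The bienergy is $E_2(c)=\tfrac12\int_c\langle D_{\partial_s}T,D_{\partial_s}T\rangle ds$, and $c$ is biharmonic if it is a critical point of $E_2$ under smooth variations with fixed endpoints. *)

(* Defs.v *)
From Stdlib Require Import Reals Lra Lia Classical ClassicalEpsilon.
Open Scope R_scope.

(* Vectors of R^n are represented as nat -> R; only coordinates i < n matter. *)

Fixpoint rsum (n : nat) (f : nat -> R) : R :=
  match n with O => 0 | S m => rsum m f + f m end.

Definition kdelta (i j : nat) : R := if Nat.eqb i j then 1 else 0.

Definition upd (y : nat -> R) (i : nat) (t : R) : nat -> R :=
  fun k => if Nat.eqb k i then t else y k.

(* the derivative of a real function at t (meaningful when it exists) *)
Definition deriv (f : R -> R) (t : R) : R :=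
  epsilon (inhabits 0) (fun l => derivable_pt_lim f t l).

Definition pderiv (f : (nat -> R) -> R) (i : nat) (y : nat -> R) : R :=
  deriv (fun t => f (upd y i t)) (y i).

Definition nonzero (n : nat) (y : nat -> R) : Prop :=
  exists i, (i < n)%nat /\ y i <> 0.

Definition zerov (n : nat) (y : nat -> R) : Prop :=
  forall i, (i < n)%nat -> y i = 0.

Definition cont_on (n : nat) (D : (nat -> R) -> Prop) (f : (nat -> R) -> R) : Prop :=
  forall y, D y -> forall eps, 0 < eps -> exists delta, 0 < delta /\
    forall z, (forall i, (i < n)%nat -> Rabs (z i - y i) < delta) ->
      Rabs (f z - f y) < eps.

Fixpoint Ck (n k : nat) (D : (nat -> R) -> Prop) (f : (nat -> R) -> R) : Prop :=
  match k with
  | O => cont_on n D f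
  | S k' => cont_on n D f /\
      forall i, (i < n)%nat ->
        (forall y, D y -> exists l, derivable_pt_lim (fun t => f (upd y i t)) (y i) l) /\
        Ck n k' D (pderiv f i)
  end.

Definition smooth_on (n : nat) (D : (nat -> R) -> Prop) (f : (nat -> R) -> R) : Prop :=
  forall k, Ck n k D f.

Definition gten (n : nat) (F : (nat -> R) -> R) (i j : nat) (y : nat -> R) : R :=
  pderiv (pderiv (fun z => (F z) ^ 2 / 2) i) j y.

(* a Minkowski norm on R^n (Finsler structure of a chart where g = g(y)) *)
Definition Minkowski (n : nat) (F : (nat -> R) -> R) : Prop :=
  (forall u v, (forall i, (i < n)%nat -> u i = v i) -> F u = F v) /\
  smooth_on n (nonzero n) F /\
  cont_on n (zerov n) F /\
  (forall lam y, 0 < lam -> F (fun i => lam * y i) = lam * F y) /\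
  (forall y, nonzero n y -> forall v, nonzero n v ->
     0 < rsum n (fun i => rsum n (fun j => gten n F i j y * v i * v j))).

Definition ginv (n : nat) (F : (nat -> R) -> R) (i j : nat) (y : nat -> R) : R :=
  epsilon (inhabits (fun _ _ : nat => 0))
    (fun m : nat -> nat -> R => forall p q, (p < n)%nat -> (q < n)%nat ->
       rsum n (fun h => m p h * gten n F h q y) = kdelta p q) i j.

Definition Cart (n : nat) (F : (nat -> R) -> R) (i j k : nat) (y : nat -> R) : R :=
  / 2 * rsum n (fun h => ginv n F i h y * pderiv (gten n F h j) k y).

Definition smooth1 (f : R -> R) : Prop :=
  exists D : nat -> R -> R, D O = f /\
    forall k t, derivable_pt_lim (D k) t (D (S k) t).

Definition smooth_curve (n : nat) (x : R -> nat -> R) : Prop :=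
  forall i, (i < n)%nat -> smooth1 (fun s => x s i).

(* y^i = dx^i/ds, tau^i = dy^i/ds, dtau^i/ds *)
Definition vel (x : R -> nat -> R) (s : R) : nat -> R :=
  fun i => deriv (fun u => x u i) s.
Definition acc (x : R -> nat -> R) (s : R) : nat -> R :=
  fun i => deriv (fun u => vel x u i) s.
Definition jerk (x : R -> nat -> R) (s : R) : nat -> R :=
  fun i => deriv (fun u => acc x u i) s.

Definition unit_speed (n : nat) (F : (nat -> R) -> R) (a b : R) (x : R -> nat -> R) : Prop :=
  forall s, a <= s <= b -> F (vel x s) = 1.

(* Riemann integral on [a,b] (0 if not integrable) *)
Definition Rint (f : R -> R) (a b : R) : R :=
  epsilon (inhabits 0)
    (fun I => exists pr : Riemann_integrable f a b, RiemannInt pr = I).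

Definition E2 (n : nat) (F : (nat -> R) -> R) (a b : R) (x : R -> nat -> R) : R :=
  / 2 * Rint (fun s => rsum n (fun i => rsum n (fun j =>
          gten n F i j (vel x s) * acc x s i * acc x s j))) a b.

Definition biharmonic (n : nat) (F : (nat -> R) -> R) (a b : R) (x : R -> nat -> R) : Prop :=
  forall V : R -> nat -> R, smooth_curve n V ->
    (forall i, (i < n)%nat -> V a i = 0 /\ V b i = 0 /\
        deriv (fun s => V s i) a = 0 /\ deriv (fun s => V s i) b = 0) ->
    derivable_pt_lim (fun t => E2 n F a b (fun s i => x s i + t * V s i)) 0 0.

Definition Dtau (n : nat) (F : (nat -> R) -> R) (x : R -> nat -> R) (s : R) (i : nat) : R :=
  jerk x s i + rsum n (fun h => rsum n (fun k =>
     Cart n F i h k (vel x s) * acc x s h * acc x s k)).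

(* Main.v *)
Require Import Defs.
From Stdlib Require Import Reals Lra Lia Classical ClassicalEpsilon FunctionalExtensionality PropExtensionality.
Open Scope R_scope.

Definition LI_stmt := forall (n:nat) (G : nat->nat->R),
  (forall v, (exists i, (i<n)%nat /\ v i <> 0) ->
     0 < rsum n (fun i => rsum n (fun j => G i j * v i * v j))) ->
  exists m : nat -> nat -> R, forall p q, (p<n)%nat -> (q<n)%nat ->
    rsum n (fun h => m p h * G h q) = kdelta p q.
Module LA.
From mathcomp Require Import all_boot all_algebra.
From mathcomp Require Import Rstruct.
Import GRing.Theory.
Local Open Scope ring_scope.

Lemma rsum_big n (f : nat -> R) : rsum n f = \sum_(i < n) f i.
Proof.
elim: n => [|n IH]; first by rewrite big_ord0.
by rewrite big_ord_recr /= IH.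
Qed.

Lemma left_inv_exists : LI_stmt.
Proof.
move=> n G Hpos.
pose A : 'M[R]_n := \matrix_(i < n, j < n) G i j.
have HA : A \in unitmx.
  rewrite -row_free_unit -kermx_eq0; apply/negPn/negP => Hk.
  have [i Hi] : exists i, row i (kermx A) != 0.
    apply/existsP; apply: contraR Hk => /existsPn H.
    apply/eqP/row_matrixP => i; rewrite row0; exact/eqP/negPn/(H i).
  set u := row i (kermx A).
  have Hu : u *m A = 0 by rewrite /u -row_mul mulmx_ker row0.
  pose v := fun k : nat => if (k < n)%N =P true is ReflectT Hk2 then u 0 (Ordinal Hk2) else 0.
  have Hv : forall k : 'I_n, v k = u 0 k.
    move=> k; rewrite /v; case: eqP => [Hk'|]; last by rewrite ltn_ord.
    by congr (u _ _); apply: val_inj.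
  have : Rlt 0%R (rsum n (fun i0 => rsum n (fun j => G i0 j * v i0 * v j))).
    apply: Hpos.
    have [k Hk3] : exists k, u 0 k != 0.
      apply/existsP; apply: contraR Hi => /existsPn H.
      apply/eqP/rowP => k; rewrite [RHS]mxE; have := H k; rewrite negbK => /eqP; done.
    exists k; split; first by apply/ltP; exact: ltn_ord.
    by rewrite Hv; apply/eqP; exact: Hk3.
  have -> : rsum n (fun i0 => rsum n (fun j => G i0 j * v i0 * v j)) = 0.
    rewrite rsum_big.
    under eq_bigr => k _ do rewrite rsum_big.
    rewrite exchange_big /=.
    transitivity (\sum_(j < n) (u *m A) 0 j * v j).
      apply: eq_bigr => j _; rewrite [(u *m A) 0 j]mxE big_distrl /=; apply: eq_bigr => k _.
      by rewrite [A k j]mxE Hv; congr (_ * _); exact: mulrC.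
    by rewrite Hu; apply: big1 => j _; rewrite mxE mul0r.
  by move/Rlt_irrefl.
pose M := invmx A.
exists (fun p q => if (p < n)%N =P true is ReflectT Hp then
                    if (q < n)%N =P true is ReflectT Hq then M (Ordinal Hp) (Ordinal Hq) else 0 else 0).
move=> p q /ltP Hp /ltP Hq.
have := mulVmx HA => /matrixP /(_ (Ordinal Hp) (Ordinal Hq)).
rewrite !mxE => H.
have Hk : kdelta p q = ((Ordinal Hp == Ordinal Hq)%:R : R).
  rewrite /kdelta; case: (PeanoNat.Nat.eqb_spec p q) => [e|e].
  - subst; have -> : Ordinal Hp = Ordinal Hq by apply: val_inj.
    by rewrite eqxx.
  - have -> : (Ordinal Hp == Ordinal Hq) = false by apply/negbTE/eqP => -[].
    by [].
rewrite Hk -H rsum_big.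
apply: eq_bigr => h _; rewrite !mxE.
case: eqP => [Hp'|]; last by rewrite Hp.
case: eqP => [Hh'|]; last by rewrite ltn_ord.
have -> : Hp' = Hp by apply: eq_irrelevance.
by congr (M _ _ * _); apply: val_inj.
Qed.
End LA.


From Coquelicot Require Import Coquelicot.
Open Scope R_scope.

Lemma deriv_eq f t l : derivable_pt_lim f t l -> deriv f t = l.
Proof.
  intro H. unfold deriv.
  pose proof (epsilon_spec (inhabits 0) (fun l => derivable_pt_lim f t l) (ex_intro _ l H)) as H2.
  simpl in H2. eapply uniqueness_limite; eauto.
Qed.

Lemma dpl_local f g t l : (exists d, 0 < d /\ forall u, Rabs (u - t) < d -> f u = g u) ->
  derivable_pt_lim f t l -> derivable_pt_lim g t l.
Proof.
  intros [d [Hd Hfg]] H eps Heps.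
  destruct (H eps Heps) as [d' Hd'].
  assert (Hm : 0 < Rmin d d') by (apply Rmin_pos; [lra| apply (cond_pos d')]).
  exists (mkposreal _ Hm). intros h Hh0 Hh. simpl in Hh.
  rewrite <- !Hfg.
  - apply Hd'; auto. apply Rlt_le_trans with (1 := Hh). apply Rmin_r.
  - unfold Rminus; rewrite Rplus_opp_r, Rabs_R0; lra.
  - replace (t + h - t) with h by ring. apply Rlt_le_trans with (1 := Hh). apply Rmin_l.
Qed.

Lemma deriv_local f g t : (exists d, 0 < d /\ forall u, Rabs (u - t) < d -> f u = g u) ->
  deriv f t = deriv g t.
Proof.
  intros Hl. unfold deriv. f_equal. apply functional_extensionality. intro l.
  apply propositional_extensionality. split; apply dpl_local; auto.
  destruct Hl as [d [Hd H]]. exists d; split; auto. intros; symmetry; auto.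
Qed.

Lemma dpl_unique f t l1 l2 : derivable_pt_lim f t l1 -> derivable_pt_lim f t l2 -> l1 = l2.
Proof. apply uniqueness_limite. Qed.

Lemma rsum_ext n f g : (forall i, (i < n)%nat -> f i = g i) -> rsum n f = rsum n g.
Proof.
  induction n; simpl; intros; auto. rewrite IHn, H; auto.
Qed.

Lemma rsum_plus n f g : rsum n (fun i => f i + g i) = rsum n f + rsum n g.
Proof. induction n; simpl; [ring|rewrite IHn; ring]. Qed.

Lemma rsum_minus n f g : rsum n (fun i => f i - g i) = rsum n f - rsum n g.
Proof. induction n; simpl; [ring|rewrite IHn; ring]. Qed.

Lemma rsum_scal n c f : rsum n (fun i => c * f i) = c * rsum n f.
Proof. induction n; simpl; [ring|rewrite IHn; ring]. Qed.

Lemma rsum_scalr n c f : rsum n (fun i => f i * c) = rsum n f * c.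
Proof. induction n; simpl; [ring|rewrite IHn; ring]. Qed.

Lemma rsum_zero n : rsum n (fun _ => 0) = 0.
Proof. induction n; simpl; [ring|rewrite IHn; ring]. Qed.

Lemma rsum_swap n m (f : nat -> nat -> R) :
  rsum n (fun i => rsum m (fun j => f i j)) = rsum m (fun j => rsum n (fun i => f i j)).
Proof.
  induction n; simpl.
  - rewrite rsum_zero; auto.
  - rewrite IHn, <- rsum_plus. auto.
Qed.

Lemma rsum_single n k c (f : nat -> R) : (k < n)%nat ->
  rsum n (fun i => (if Nat.eqb i k then c else 0) * f i) = c * f k.
Proof.
  induction n; intros Hk; [lia|]. simpl.
  destruct (Nat.eq_dec k n).
  - subst. rewrite Nat.eqb_refl.
    rewrite (rsum_ext _ _ (fun _ => 0)), rsum_zero. ring.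
    intros i Hi. destruct (Nat.eqb_spec i n); [lia|ring].
  - rewrite IHn by lia. destruct (Nat.eqb_spec n k); [lia|ring].
Qed.

Lemma rsum_kdelta n k (f : nat -> R) : (k < n)%nat ->
  rsum n (fun i => kdelta k i * f i) = f k.
Proof.
  intros. rewrite (rsum_ext _ _ (fun i => (if Nat.eqb i k then 1 else 0) * f i)).
  rewrite rsum_single; auto; ring.
  intros. unfold kdelta. destruct (Nat.eqb_spec k i), (Nat.eqb_spec i k); auto; lia.
Qed.

Lemma dpl_rsum n (f : nat -> R -> R) (l : nat -> R) t :
  (forall i, (i < n)%nat -> derivable_pt_lim (f i) t (l i)) ->
  derivable_pt_lim (fun s => rsum n (fun i => f i s)) t (rsum n l).
Proof.
  induction n; intros H; simpl.
  - apply derivable_pt_lim_const.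
  - apply (derivable_pt_lim_plus (fun s => rsum n (fun i => f i s)) (f n)); auto.
Qed.

Definition resp (n : nat) (f : (nat -> R) -> R) : Prop :=
  forall u v, (forall i, (i < n)%nat -> u i = v i) -> f u = f v.

Lemma upd_same y i t : upd y i t i = t.
Proof. unfold upd. rewrite Nat.eqb_refl. auto. Qed.

Lemma upd_other y i j t : j <> i -> upd y i t j = y j.
Proof. intros. unfold upd. destruct (Nat.eqb_spec j i); auto; lia. Qed.

Lemma upd_upd y i t s : upd (upd y i t) i s = upd y i s.
Proof. apply functional_extensionality; intro k. unfold upd. destruct (Nat.eqb k i); auto. Qed.

Lemma upd_id y i : upd y i (y i) = y.
Proof. apply functional_extensionality; intro k. unfold upd. destruct (Nat.eqb_spec k i); subst; auto. Qed.

Lemma upd_comm y i j t s : i <> j -> upd (upd y i t) j s = upd (upd y j s) i t.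
Proof.
  intros. apply functional_extensionality; intro k. unfold upd.
  destruct (Nat.eqb_spec k j), (Nat.eqb_spec k i); subst; auto; lia.
Qed.

Lemma pderiv_resp n f i : (i < n)%nat -> resp n f -> resp n (pderiv f i).
Proof.
  intros Hi Hf u v Huv. unfold pderiv. rewrite (Huv i Hi).
  f_equal. apply functional_extensionality; intro t. apply Hf.
  intros k Hk. unfold upd. destruct (Nat.eqb k i); auto.
Qed.

Lemma fin_delta n (P : nat -> R -> Prop) :
  (forall i d d', (i < n)%nat -> 0 < d' <= d -> P i d -> P i d') ->
  (forall i, (i < n)%nat -> exists d, 0 < d /\ P i d) ->
  exists d, 0 < d /\ forall i, (i < n)%nat -> P i d.
Proof.
  induction n; intros Hm Hex.
  - exists 1; split; [lra| intros; lia].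
  - destruct IHn as [d1 [Hd1 H1]].
    + intros; eapply Hm; eauto; lia.
    + intros; apply Hex; lia.
    + destruct (Hex n ltac:(lia)) as [d2 [Hd2 H2]].
      exists (Rmin d1 d2). split; [apply Rmin_pos; auto|].
      intros i Hi. destruct (Nat.eq_dec i n).
      * subst. eapply Hm; eauto. split; [apply Rmin_pos; auto| apply Rmin_r].
      * eapply Hm; [lia| |apply H1; lia]. split; [apply Rmin_pos; auto| apply Rmin_l].
Qed.

Definition ND (n : nat) := Defs.nonzero n.

Lemma nonzero_open n y : Defs.nonzero n y -> exists r, 0 < r /\
  forall z, (forall i, (i < n)%nat -> Rabs (z i - y i) < r) -> Defs.nonzero n z.
Proof.
  intros [i [Hi Hy]]. exists (Rabs (y i) / 2). split.
  - apply Rabs_pos_lt in Hy. lra.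
  - intros z Hz. exists i. split; auto. intro Hz0. specialize (Hz i Hi).
    rewrite Hz0 in Hz. rewrite Rminus_0_l, Rabs_Ropp in Hz. apply Rabs_pos_lt in Hy. lra.
Qed.

Lemma cont_on_comp {A : Type} n D f y (near : R -> A -> Prop) (z : A -> nat -> R) :
  cont_on n D f -> D y ->
  (forall d d' a, 0 < d' <= d -> near d' a -> near d a) ->
  (forall i, (i < n)%nat -> forall eps, 0 < eps -> exists d, 0 < d /\
      forall a, near d a -> Rabs (z a i - y i) < eps) ->
  forall eps, 0 < eps -> exists d, 0 < d /\ forall a, near d a -> Rabs (f (z a) - f y) < eps.
Proof.
  intros Hf Hy Hmono Hz eps Heps.
  destruct (Hf y Hy eps Heps) as [d1 [Hd1 H1]].
  destruct (fin_delta n (fun i d => 0 < d /\ forall a, near d a -> Rabs (z a i - y i) < d1)) as [d [Hd H]].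
  - intros i d d' Hi Hd' [_ Hdd]. split; [lra|]. intros a Ha. apply Hdd. eapply Hmono; eauto.
  - intros i Hi. destruct (Hz i Hi d1 Hd1) as [d [Hd Hdd]]. exists d; split; auto.
  - exists d. split; auto. intros a Ha. apply H1. intros i Hi. apply (H i Hi). auto.
Qed.

Lemma cont_on_ext n f g : (forall y, ND n y -> f y = g y) -> cont_on n (ND n) f -> cont_on n (ND n) g.
Proof.
  intros Hfg Hf y Hy eps Heps.
  destruct (Hf y Hy eps Heps) as [d1 [Hd1 H1]].
  destruct (nonzero_open n y Hy) as [r [Hr Hr2]].
  exists (Rmin d1 r). split; [apply Rmin_pos; auto|]. intros z Hz.
  rewrite <- !Hfg; auto.
  - apply H1. intros i Hi. eapply Rlt_le_trans; [apply Hz; auto| apply Rmin_l].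
  - apply Hr2. intros i Hi. eapply Rlt_le_trans; [apply Hz; auto| apply Rmin_r].
Qed.

Lemma upd_near n y i u r : (i < n)%nat -> 0 < r -> Rabs (u - y i) < r ->
  forall k, (k < n)%nat -> Rabs (upd y i u k - y k) < r.
Proof.
  intros. unfold upd. destruct (Nat.eqb_spec k i).
  - subst; auto.
  - unfold Rminus; rewrite Rplus_opp_r, Rabs_R0; auto.
Qed.

Lemma upd_ND_near n y i : (i < n)%nat -> ND n y -> exists d, 0 < d /\
  forall u, Rabs (u - y i) < d -> ND n (upd y i u).
Proof.
  intros Hi Hy. destruct (nonzero_open n y Hy) as [r [Hr H]].
  exists r; split; auto. intros u Hu. apply H. apply upd_near; auto.
Qed.

Lemma pderiv_ext n f g i y : (i < n)%nat -> (forall y, ND n y -> f y = g y) -> ND n y ->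
  pderiv f i y = pderiv g i y.
Proof.
  intros Hi Hfg Hy. unfold pderiv. apply deriv_local.
  destruct (upd_ND_near n y i Hi Hy) as [d [Hd H]]. exists d; split; auto.
Qed.

Lemma pderiv_ex_ext n f g i y : (i < n)%nat -> (forall y, ND n y -> f y = g y) -> ND n y ->
  (exists l, derivable_pt_lim (fun t => f (upd y i t)) (y i) l) ->
  (exists l, derivable_pt_lim (fun t => g (upd y i t)) (y i) l).
Proof.
  intros Hi Hfg Hy [l Hl]. exists l. eapply dpl_local; eauto.
  destruct (upd_ND_near n y i Hi Hy) as [d [Hd H]]. exists d; split; auto.
Qed.

Lemma Ck_ext n k f g : (forall y, ND n y -> f y = g y) -> Ck n k (ND n) f -> Ck n k (ND n) g.
Proof.
  revert f g. induction k; simpl; intros f g Hfg Hf.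
  - eapply cont_on_ext; eauto.
  - destruct Hf as [Hc Hd]. split; [eapply cont_on_ext; eauto|].
    intros i Hi. destruct (Hd i Hi) as [He Hk]. split.
    + intros y Hy. eapply pderiv_ex_ext; eauto.
    + eapply IHk; [|exact Hk]. intros y Hy. eapply pderiv_ext; eauto.
Qed.

Lemma Ck_mono n k D f : Ck n (S k) D f -> Ck n k D f.
Proof.
  revert f. induction k; simpl; intros f Hf.
  - tauto.
  - destruct Hf as [Hc Hd]. split; auto. intros i Hi. destruct (Hd i Hi) as [He Hk].
    split; auto.
Qed.

Lemma Ck_cont n k D f : Ck n k D f -> cont_on n D f.
Proof. destruct k; simpl; tauto. Qed.

Lemma Ck_le n k m D f : (m <= k)%nat -> Ck n k D f -> Ck n m D f.
Proof.
  intros Hle. induction Hle; auto. intros H. apply IHHle. apply Ck_mono; auto.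
Qed.

Lemma cont_on_const n D c : cont_on n D (fun _ => c).
Proof. intros y Hy eps Heps. exists 1. split; [lra|]. intros. unfold Rminus; rewrite Rplus_opp_r, Rabs_R0; auto. Qed.

Lemma cont_on_plus n D f g : cont_on n D f -> cont_on n D g -> cont_on n D (fun z => f z + g z).
Proof.
  intros Hf Hg y Hy eps Heps.
  destruct (Hf y Hy (eps/2) ltac:(lra)) as [d1 [Hd1 H1]].
  destruct (Hg y Hy (eps/2) ltac:(lra)) as [d2 [Hd2 H2]].
  exists (Rmin d1 d2). split; [apply Rmin_pos; auto|]. intros z Hz.
  assert (A1 := H1 z ltac:(intros i Hi; eapply Rlt_le_trans; [apply Hz; auto|apply Rmin_l])).
  assert (A2 := H2 z ltac:(intros i Hi; eapply Rlt_le_trans; [apply Hz; auto|apply Rmin_r])).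
  replace (f z + g z - (f y + g y)) with ((f z - f y) + (g z - g y)) by ring.
  eapply Rle_lt_trans; [apply Rabs_triang|]. lra.
Qed.

Lemma mult_close a b eps : 0 < eps ->
  exists e, 0 < e /\ forall a' b', (Rabs (a' - a) < e -> Rabs (b' - b) < e -> Rabs (a' * b' - a * b) < eps).
Proof.
  intros Heps.
  set (K := 1 + Rabs a + Rabs b).
  assert (HK : 0 < K) by (unfold K; pose proof (Rabs_pos a); pose proof (Rabs_pos b); lra).
  exists (Rmin 1 (eps / (2 * K))). split.
  - apply Rmin_pos; [lra| apply Rdiv_lt_0_compat; lra].
  - intros a' b' H1 H2.
    set (e := Rmin 1 (eps / (2 * K))) in *.
    assert (He1 : e <= 1) by apply Rmin_l.
    assert (He2 : e <= eps / (2*K)) by apply Rmin_r.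
    replace (a' * b' - a * b) with ((a' - a) * (b' - b) + (a' - a) * b + a * (b' - b)) by ring.
    eapply Rle_lt_trans; [apply Rabs_triang|].
    eapply Rle_lt_trans; [apply Rplus_le_compat_r; apply Rabs_triang|].
    rewrite !Rabs_mult.
    assert (Hx : Rabs (a' - a) * Rabs (b' - b) <= e * e).
    { apply Rmult_le_compat; try apply Rabs_pos; lra. }
    assert (Hy : Rabs (a' - a) * Rabs b <= e * Rabs b).
    { apply Rmult_le_compat_r; [apply Rabs_pos| lra]. }
    assert (Hz : Rabs a * Rabs (b' - b) <= Rabs a * e).
    { apply Rmult_le_compat_l; [apply Rabs_pos| lra]. }
    assert (e * e <= e) by (assert (0 < e) by (unfold e; apply Rmin_pos; [lra| apply Rdiv_lt_0_compat; lra]); nra).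
    assert (e * K <= eps / 2).
    { assert (e * K <= eps / (2 * K) * K) by (apply Rmult_le_compat_r; lra).
      replace (eps / (2 * K) * K) with (eps / 2) in H0 by (field; lra). auto. }
    unfold K in H0. lra.
Qed.

Lemma cont_on_mult n D f g : cont_on n D f -> cont_on n D g -> cont_on n D (fun z => f z * g z).
Proof.
  intros Hf Hg y Hy eps Heps.
  destruct (mult_close (f y) (g y) eps Heps) as [e [He Hc]].
  destruct (Hf y Hy e He) as [d1 [Hd1 H1]].
  destruct (Hg y Hy e He) as [d2 [Hd2 H2]].
  exists (Rmin d1 d2). split; [apply Rmin_pos; auto|]. intros z Hz.
  apply Hc.
  - apply H1; intros i Hi; eapply Rlt_le_trans; [apply Hz; auto|apply Rmin_l].
  - apply H2; intros i Hi; eapply Rlt_le_trans; [apply Hz; auto|apply Rmin_r].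
Qed.

Lemma pderiv_val f i y l : derivable_pt_lim (fun t => f (upd y i t)) (y i) l -> pderiv f i y = l.
Proof. intros; unfold pderiv; apply deriv_eq; auto. Qed.

Lemma Ck_pd n k D f i y : Ck n (S k) D f -> (i < n)%nat -> D y ->
  derivable_pt_lim (fun t => f (upd y i t)) (y i) (pderiv f i y).
Proof.
  intros [_ H] Hi Hy. destruct (H i Hi) as [He _]. destruct (He y Hy) as [l Hl].
  rewrite (pderiv_val _ _ _ _ Hl). auto.
Qed.

Lemma Ck_pderiv n k D f i : Ck n (S k) D f -> (i < n)%nat -> Ck n k D (pderiv f i).
Proof. intros [_ H] Hi. apply (H i Hi). Qed.

Lemma pderiv_const c i : pderiv (fun _ => c) i = fun _ => 0.
Proof.
  apply functional_extensionality; intro y. apply pderiv_val. apply derivable_pt_lim_const.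
Qed.

Lemma Ck_const n k D c : Ck n k D (fun _ => c).
Proof.
  revert c; induction k; simpl; intros c.
  - apply cont_on_const.
  - split; [apply cont_on_const|]. intros i Hi. split.
    + intros; exists 0; apply derivable_pt_lim_const.
    + rewrite pderiv_const. apply IHk.
Qed.

Lemma Ck_plus n k f g : Ck n k (ND n) f -> Ck n k (ND n) g -> Ck n k (ND n) (fun z => f z + g z).
Proof.
  revert f g; induction k; simpl; intros f g Hf Hg.
  - apply cont_on_plus; auto.
  - split; [apply cont_on_plus; tauto|]. intros i Hi. split.
    + intros y Hy. exists (pderiv f i y + pderiv g i y).
      apply (derivable_pt_lim_plus (fun t => f (upd y i t)) (fun t => g (upd y i t)));
      eapply (Ck_pd n k); simpl; eauto.
    + eapply Ck_ext; [|apply (IHk (pderiv f i) (pderiv g i))].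
      * intros y Hy. symmetry. apply pderiv_val.
        apply (derivable_pt_lim_plus (fun t => f (upd y i t)) (fun t => g (upd y i t)));
        eapply (Ck_pd n k); simpl; eauto.
      * apply Hf; auto.
      * apply Hg; auto.
Qed.

Lemma Ck_mult n k f g : Ck n k (ND n) f -> Ck n k (ND n) g -> Ck n k (ND n) (fun z => f z * g z).
Proof.
  revert f g; induction k; simpl; intros f g Hf Hg.
  - apply cont_on_mult; auto.
  - split; [apply cont_on_mult; tauto|]. intros i Hi.
    assert (Hd : forall y, ND n y -> derivable_pt_lim (fun t => f (upd y i t) * g (upd y i t)) (y i)
       (pderiv f i y * g y + f y * pderiv g i y)).
    { intros y Hy. rewrite <- (upd_id y i) at 3 4.
      apply (derivable_pt_lim_mult (fun t => f (upd y i t)) (fun t => g (upd y i t)));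
      eapply (Ck_pd n k); simpl; eauto. }
    split.
    + intros y Hy. eexists. apply Hd; auto.
    + eapply Ck_ext with (f := fun z => pderiv f i z * g z + f z * pderiv g i z).
      * intros y Hy. symmetry. apply pderiv_val. apply Hd; auto.
      * apply Ck_plus; apply IHk.
        -- apply Hf; auto.
        -- apply (Ck_mono n k (ND n) g); simpl; auto.
        -- apply (Ck_mono n k (ND n) f); simpl; auto.
        -- apply Hg; auto.
Qed.

Lemma cont_pt_eps f x : continuity_pt f x ->
  forall eps, 0 < eps -> exists d, 0 < d /\ forall y, Rabs (y - x) < d -> Rabs (f y - f x) < eps.
Proof.
  intros H eps Heps. destruct (H eps Heps) as [d [Hd H2]].
  exists d; split; auto. intros y Hy.
  destruct (Req_dec y x) as [->|Hne].
  - unfold Rminus; rewrite Rplus_opp_r, Rabs_R0; auto.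
  - apply (H2 y). split; [split; auto; exact I| auto].
Qed.

Lemma eps_cont_pt f x :
  (forall eps, 0 < eps -> exists d, 0 < d /\ forall y, Rabs (y - x) < d -> Rabs (f y - f x) < eps) ->
  continuity_pt f x.
Proof.
  intros H eps Heps. destruct (H eps Heps) as [d [Hd H2]].
  exists d; split; auto. intros y [_ Hy]. apply H2. auto.
Qed.

Lemma dpl_cont f x l : derivable_pt_lim f x l -> continuity_pt f x.
Proof. intros H. apply derivable_continuous_pt. exists l; auto. Qed.

Definition rmix (p : R -> nat -> R) t0 m t : nat -> R :=
  fun k => if Nat.ltb k m then p t k else p t0 k.

Lemma rmix_t0 p t0 m : rmix p t0 m t0 = p t0.
Proof. apply functional_extensionality; intro k. unfold rmix. destruct (Nat.ltb k m); auto. Qed.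

Lemma rmix_S p t0 m t : rmix p t0 (S m) t = upd (rmix p t0 m t) m (p t m).
Proof.
  apply functional_extensionality; intro k. unfold rmix, upd.
  destruct (Nat.eqb_spec k m), (Nat.ltb_spec k (S m)), (Nat.ltb_spec k m); subst; auto; lia.
Qed.

Lemma rmix_m p t0 m t : rmix p t0 m t = upd (rmix p t0 m t) m (p t0 m).
Proof.
  apply functional_extensionality; intro k. unfold rmix, upd.
  destruct (Nat.eqb_spec k m), (Nat.ltb_spec k m); subst; auto; lia.
Qed.

Lemma chain_step n f p t0 m dpm :
  Ck n 1 (ND n) f -> ND n (p t0) -> (m < n)%nat ->
  (forall k, (k < n)%nat -> continuity_pt (fun t => p t k) t0) ->
  derivable_pt_lim (fun t => p t m) t0 dpm ->
  derivable_pt_lim (fun t => f (rmix p t0 (S m) t) - f (rmix p t0 m t)) t0 (pderiv f m (p t0) * dpm).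
Proof.
  intros Hf Hp0 Hm Hcont Hd eps Heps.
  set (c0 := pderiv f m (p t0)).
  destruct (mult_close c0 dpm eps Heps) as [e [He Hmc]].
  assert (Hcd : cont_on n (ND n) (pderiv f m)).
  { apply (Ck_cont n 0). apply (Ck_pderiv n 0); auto. }
  destruct (Hcd (p t0) Hp0 e He) as [eta1 [Heta1 H1]].
  destruct (nonzero_open n (p t0) Hp0) as [r0 [Hr0 H0]].
  set (eta := Rmin eta1 r0).
  assert (Heta : 0 < eta) by (apply Rmin_pos; auto).
  destruct (fin_delta n (fun k d => forall t, Rabs (t - t0) < d -> Rabs (p t k - p t0 k) < eta))
    as [d1 [Hd1 Hd1']].
  { intros k d d' _ Hdd H t Ht. apply H. lra. }
  { intros k Hk. destruct (cont_pt_eps _ _ (Hcont k Hk) eta Heta) as [d [Hd' Hd'']].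
    exists d; split; auto. }
  destruct (Hd e He) as [d2 Hd2].
  assert (Hdd : 0 < Rmin d1 d2) by (apply Rmin_pos; auto; apply (cond_pos d2)).
  exists (mkposreal _ Hdd). intros h Hh0 Hh. simpl in Hh.
  set (t := t0 + h).
  assert (Htt : Rabs (t - t0) < d1).
  { unfold t. replace (t0 + h - t0) with h by ring. eapply Rlt_le_trans; [exact Hh| apply Rmin_l]. }
  assert (Hbox : forall u, Rabs (u - p t0 m) <= Rabs (p t m - p t0 m) ->
             forall k, (k < n)%nat -> Rabs (upd (rmix p t0 m t) m u k - p t0 k) < eta).
  { intros u Hu k Hk. unfold upd, rmix. destruct (Nat.eqb_spec k m).
    - subst. eapply Rle_lt_trans; [exact Hu| apply Hd1'; auto].
    - destruct (Nat.ltb k m).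
      + apply Hd1'; auto.
      + unfold Rminus; rewrite Rplus_opp_r, Rabs_R0; auto. }
  assert (HND : forall u, Rabs (u - p t0 m) <= Rabs (p t m - p t0 m) -> ND n (upd (rmix p t0 m t) m u)).
  { intros u Hu. apply H0. intros k Hk. eapply Rlt_le_trans; [apply Hbox; auto| apply Rmin_r]. }
  assert (Hseg : forall u, Rmin (p t0 m) (p t m) <= u <= Rmax (p t0 m) (p t m) ->
             Rabs (u - p t0 m) <= Rabs (p t m - p t0 m)).
  { intros u [Hu1 Hu2]. unfold Rmin, Rmax in *.
    destruct (Rle_dec (p t0 m) (p t m)); unfold Rabs; repeat destruct Rcase_abs; lra. }
  assert (Hder : forall u, Rmin (p t0 m) (p t m) <= u <= Rmax (p t0 m) (p t m) ->
     derivable_pt_lim (fun v => f (upd (rmix p t0 m t) m v)) u (pderiv f m (upd (rmix p t0 m t) m u))).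
  { intros u Hu. pose proof (Ck_pd n 0 (ND n) f m (upd (rmix p t0 m t) m u) Hf Hm (HND u (Hseg u Hu))) as HH.
    rewrite upd_same in HH. eapply dpl_local; [|exact HH].
    exists 1; split; [lra|]. intros v _. rewrite upd_upd. auto. }
  destruct (MVT_gen (fun v => f (upd (rmix p t0 m t) m v)) (p t0 m) (p t m)
              (fun u => pderiv f m (upd (rmix p t0 m t) m u))) as [c [Hc Hmvt]].
  { intros x Hx. apply is_derive_Reals. apply Hder. lra. }
  { intros x Hx. eapply dpl_cont. apply Hder. auto. }
  rewrite rmix_S, rmix_t0. fold t.
  rewrite rmix_t0.
  replace (f (upd (rmix p t0 m t) m (p t m)) - f (rmix p t0 m t) - (f (p t0) - f (p t0)))
    with (f (upd (rmix p t0 m t) m (p t m)) - f (upd (rmix p t0 m t) m (p t0 m)))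
    by (rewrite <- (rmix_m p t0 m t); ring).
  rewrite Hmvt.
  replace (pderiv f m (upd (rmix p t0 m t) m c) * (p t m - p t0 m) / h)
    with (pderiv f m (upd (rmix p t0 m t) m c) * ((p (t0 + h) m - p t0 m) / h))
    by (unfold t; field; auto).
  apply Hmc.
  - apply H1. intros k Hk. eapply Rlt_le_trans; [apply Hbox; auto| apply Rmin_l].
  - apply Hd2; auto. eapply Rlt_le_trans; [exact Hh| apply Rmin_r].
Qed.

Lemma dpl_ext f g t l : (forall u, f u = g u) -> derivable_pt_lim f t l -> derivable_pt_lim g t l.
Proof. intros H. apply dpl_local. exists 1; split; [lra|]. auto. Qed.

Lemma chain n f p t0 dp :
  Ck n 1 (ND n) f -> resp n f -> ND n (p t0) ->
  (forall i, (i < n)%nat -> derivable_pt_lim (fun t => p t i) t0 (dp i)) ->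
  derivable_pt_lim (fun t => f (p t)) t0 (rsum n (fun k => pderiv f k (p t0) * dp k)).
Proof.
  intros Hf Hr Hp Hd.
  assert (Hc : forall k, (k < n)%nat -> continuity_pt (fun t => p t k) t0).
  { intros k Hk; eapply dpl_cont; eauto. }
  assert (Hm : forall m, (m <= n)%nat ->
     derivable_pt_lim (fun t => f (rmix p t0 m t)) t0 (rsum m (fun k => pderiv f k (p t0) * dp k))).
  { induction m; intros Hmn.
    - eapply dpl_ext; [|apply (derivable_pt_lim_const (f (p t0)))].
      intros u. unfold fct_cte, rmix. simpl. reflexivity.
    - change (rsum (S m) (fun k => pderiv f k (p t0) * dp k)) with
        (rsum m (fun k => pderiv f k (p t0) * dp k) + pderiv f m (p t0) * dp m).
      eapply dpl_ext; [|apply (derivable_pt_lim_plus (fun t => f (rmix p t0 m t))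
          (fun t => f (rmix p t0 (S m) t) - f (rmix p t0 m t)))].
      + intros u. unfold plus_fct. ring.
      + apply IHm; lia.
      + apply (chain_step n); auto; try lia. }
  eapply dpl_ext; [|apply (Hm n (le_n n))].
  intros u. apply Hr. intros i Hi. unfold rmix. destruct (Nat.ltb_spec i n); auto; lia.
Qed.

Lemma loc_R x d (P : R -> Prop) : 0 < d -> (forall u, Rabs (u - x) < d -> P u) -> locally x P.
Proof. intros Hd H. exists (mkposreal d Hd). intros u Hu. apply H. exact Hu. Qed.

Lemma cont2d_comp n D f (z : R -> R -> nat -> R) x0 y0 :
  cont_on n D f -> D (z x0 y0) ->
  (forall i, (i < n)%nat -> forall eps, 0 < eps -> exists d, 0 < d /\
     forall u v, Rabs (u - x0) < d -> Rabs (v - y0) < d -> Rabs (z u v i - z x0 y0 i) < eps) ->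
  continuity_2d_pt (fun u v => f (z u v)) x0 y0.
Proof.
  intros Hf HD Hz eps.
  destruct (cont_on_comp n D f (z x0 y0) (fun d (a : R * R) => Rabs (fst a - x0) < d /\ Rabs (snd a - y0) < d)
     (fun a => z (fst a) (snd a)) Hf HD) with (eps := pos eps) as [d [Hd H]].
  - intros d d' a Hdd [H1 H2]; split; lra.
  - intros i Hi e He. destruct (Hz i Hi e He) as [d [Hd H]]. exists d; split; auto.
    intros [u v] [H1 H2]; simpl in *. apply H; auto.
  - apply cond_pos.
  - exists (mkposreal d Hd). intros u v Hu Hv. apply (H (u, v)). simpl; auto.
Qed.

Lemma loc_sym (x : R) (f g : R -> R) : locally x (fun t => f t = g t) -> locally x (fun t => g t = f t).
Proof. intros [e He]. exists e. intros t Ht. symmetry. apply He. auto. Qed.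

Lemma dpl_ex_derive f x l : derivable_pt_lim f x l -> ex_derive f x.
Proof. intros H. exists l. apply is_derive_Reals. auto. Qed.

Lemma dpl_Derive f x l : derivable_pt_lim f x l -> Derive f x = l.
Proof. intros H. apply is_derive_unique. apply is_derive_Reals. auto. Qed.

Section Schw.
Variable n : nat.
Variable f : (nat -> R) -> R.
Variable y : nat -> R.
Variables i j : nat.
Hypothesis Hf : Ck n 2 (ND n) f.
Hypothesis Hy : ND n y.
Hypothesis Hi : (i < n)%nat.
Hypothesis Hj : (j < n)%nat.
Hypothesis Hij : i <> j.

Definition w u v := upd (upd y i u) j v.

Lemma w_i u v t : upd (w u v) i t = w t v.
Proof. unfold w. rewrite upd_comm by auto. rewrite upd_upd. rewrite upd_comm by auto. auto. Qed.
Lemma w_j u v t : upd (w u v) j t = w u t.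
Proof. unfold w. rewrite upd_upd. auto. Qed.
Lemma w_ii u v : w u v i = u.
Proof. unfold w. rewrite upd_other by auto. apply upd_same. Qed.
Lemma w_jj u v : w u v j = v.
Proof. unfold w. apply upd_same. Qed.
Lemma w_yj u : w u (y j) = upd y i u.
Proof. unfold w. replace (y j) with (upd y i u j) by (apply upd_other; auto). apply upd_id. Qed.
Lemma w_yi v : w (y i) v = upd y j v.
Proof. unfold w. rewrite upd_id. auto. Qed.

Lemma schwarz_main : pderiv (pderiv f i) j y = pderiv (pderiv f j) i y.
Proof.
  destruct (nonzero_open n y Hy) as [r [Hr Hbox]].
  assert (Hw : forall u v, Rabs (u - y i) < r -> Rabs (v - y j) < r -> ND n (w u v)).
  { intros u v Hu Hv. apply Hbox. intros k Hk. unfold w, upd.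
    destruct (Nat.eqb_spec k j); [subst; auto|].
    destruct (Nat.eqb_spec k i); [subst; auto|].
    unfold Rminus; rewrite Rplus_opp_r, Rabs_R0; auto. }
  assert (Hf1 : forall k, (k < n)%nat -> Ck n 1 (ND n) (pderiv f k)).
  { intros k Hk. apply (Ck_pderiv n 1); auto. }
  assert (Dj : forall u v, Rabs (u - y i) < r -> Rabs (v - y j) < r ->
     derivable_pt_lim (fun t => f (w u t)) v (pderiv f j (w u v))).
  { intros u v Hu Hv. pose proof (Ck_pd n 1 (ND n) f j (w u v) Hf Hj (Hw u v Hu Hv)) as H.
    rewrite w_jj in H. eapply dpl_ext; [|exact H]. intros t. cbv beta. rewrite w_j. auto. }
  assert (Di : forall u v, Rabs (u - y i) < r -> Rabs (v - y j) < r ->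
     derivable_pt_lim (fun t => f (w t v)) u (pderiv f i (w u v))).
  { intros u v Hu Hv. pose proof (Ck_pd n 1 (ND n) f i (w u v) Hf Hi (Hw u v Hu Hv)) as H.
    rewrite w_ii in H. eapply dpl_ext; [|exact H]. intros t. cbv beta. rewrite w_i. auto. }
  assert (Dji : forall u v, Rabs (u - y i) < r -> Rabs (v - y j) < r ->
     derivable_pt_lim (fun t => pderiv f j (w t v)) u (pderiv (pderiv f j) i (w u v))).
  { intros u v Hu Hv. pose proof (Ck_pd n 0 (ND n) (pderiv f j) i (w u v) (Hf1 j Hj) Hi (Hw u v Hu Hv)) as H.
    rewrite w_ii in H. eapply dpl_ext; [|exact H]. intros t. cbv beta. rewrite w_i. auto. }
  assert (Dij : forall u v, Rabs (u - y i) < r -> Rabs (v - y j) < r ->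
     derivable_pt_lim (fun t => pderiv f i (w u t)) v (pderiv (pderiv f i) j (w u v))).
  { intros u v Hu Hv. pose proof (Ck_pd n 0 (ND n) (pderiv f i) j (w u v) (Hf1 i Hi) Hj (Hw u v Hu Hv)) as H.
    rewrite w_jj in H. eapply dpl_ext; [|exact H]. intros t. cbv beta. rewrite w_j. auto. }
  assert (Hr2 : 0 < r / 2) by lra.
  assert (Lj : forall u v, Rabs (u - y i) < r / 2 -> Rabs (v - y j) < r / 2 ->
     locally u (fun z => Derive (fun t => f (w z t)) v = pderiv f j (w z v))).
  { intros u v Hu Hv. apply (loc_R u (r/2)); auto. intros z Hz.
    apply dpl_Derive. apply Dj.
    - replace (z - y i) with ((z - u) + (u - y i)) by ring.
      eapply Rle_lt_trans; [apply Rabs_triang|]. lra.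
    - lra. }
  assert (Li : forall u v, Rabs (u - y i) < r / 2 -> Rabs (v - y j) < r / 2 ->
     locally v (fun z => Derive (fun t => f (w t z)) u = pderiv f i (w u z))).
  { intros u v Hu Hv. apply (loc_R v (r/2)); auto. intros z Hz.
    apply dpl_Derive. apply Di.
    - lra.
    - replace (z - y j) with ((z - v) + (v - y j)) by ring.
      eapply Rle_lt_trans; [apply Rabs_triang|]. lra. }
  assert (E1 : forall u v, Rabs (u - y i) < r / 2 -> Rabs (v - y j) < r / 2 ->
     Derive (fun z => Derive (fun t => f (w z t)) v) u = pderiv (pderiv f j) i (w u v)).
  { intros u v Hu Hv. etransitivity; [apply Derive_ext_loc; exact (Lj u v Hu Hv)|].
    apply dpl_Derive. apply Dji; lra. }
  assert (E2 : forall u v, Rabs (u - y i) < r / 2 -> Rabs (v - y j) < r / 2 ->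
     Derive (fun z => Derive (fun t => f (w t z)) u) v = pderiv (pderiv f i) j (w u v)).
  { intros u v Hu Hv. etransitivity; [apply Derive_ext_loc; exact (Li u v Hu Hv)|].
    apply dpl_Derive. apply Dij; lra. }
  assert (Hyi : Rabs (y i - y i) < r / 2) by (unfold Rminus; rewrite Rplus_opp_r, Rabs_R0; lra).
  assert (Hyj : Rabs (y j - y j) < r / 2) by (unfold Rminus; rewrite Rplus_opp_r, Rabs_R0; lra).
  assert (Hwy : w (y i) (y j) = y) by (rewrite w_yi, upd_id; auto).
  assert (HS := Schwarz (fun u v => f (w u v)) (y i) (y j)).
  cbv beta in HS. rewrite (E1 _ _ Hyi Hyj), (E2 _ _ Hyi Hyj), Hwy in HS.
  symmetry. apply HS.
  - exists (mkposreal _ Hr2). intros u v Hu Hv. simpl in Hu, Hv. repeat split.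
    + eapply dpl_ex_derive. apply Di; lra.
    + eapply dpl_ex_derive. apply Dj; lra.
    + eapply ex_derive_ext_loc. { apply loc_sym; exact (Lj u v Hu Hv). }
      eapply dpl_ex_derive. apply Dji; lra.
    + eapply ex_derive_ext_loc. { apply loc_sym; exact (Li u v Hu Hv). }
      eapply dpl_ex_derive. apply Dij; lra.
  - eapply continuity_2d_pt_ext_loc.
    { exists (mkposreal _ Hr2). intros u v Hu Hv. simpl in Hu, Hv. symmetry. apply E1; auto. }
    apply (cont2d_comp n (ND n)).
    + apply (Ck_cont n 0). apply (Ck_pderiv n 0); auto.
    + rewrite Hwy; auto.
    + intros k Hk e He. exists e. split; auto. intros u v Hu Hv. rewrite Hwy. unfold w, upd.
      destruct (Nat.eqb_spec k j); [subst; auto|].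
      destruct (Nat.eqb_spec k i); [subst; auto|].
      unfold Rminus; rewrite Rplus_opp_r, Rabs_R0; auto.
  - eapply continuity_2d_pt_ext_loc.
    { exists (mkposreal _ Hr2). intros u v Hu Hv. simpl in Hu, Hv. symmetry. apply E2; auto. }
    apply (cont2d_comp n (ND n)).
    + apply (Ck_cont n 0). apply (Ck_pderiv n 0); auto.
    + rewrite Hwy; auto.
    + intros k Hk e He. exists e. split; auto. intros u v Hu Hv. rewrite Hwy. unfold w, upd.
      destruct (Nat.eqb_spec k j); [subst; auto|].
      destruct (Nat.eqb_spec k i); [subst; auto|].
      unfold Rminus; rewrite Rplus_opp_r, Rabs_R0; auto.
Qed.
End Schw.

Lemma schwarz n f y i j : Ck n 2 (ND n) f -> ND n y -> (i < n)%nat -> (j < n)%nat ->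
  pderiv (pderiv f i) j y = pderiv (pderiv f j) i y.
Proof.
  intros. destruct (Nat.eq_dec i j); [subst; auto|]. apply (schwarz_main n); auto.
Qed.

Lemma kdelta_sym i j : kdelta i j = kdelta j i.
Proof. unfold kdelta. destruct (Nat.eqb_spec i j), (Nat.eqb_spec j i); auto; lia. Qed.

Lemma rsum_kdelta_r n k (f : nat -> R) : (k < n)%nat ->
  rsum n (fun i => f i * kdelta i k) = f k.
Proof.
  intros. rewrite <- (rsum_kdelta n k f) by auto. apply rsum_ext. intros. rewrite kdelta_sym. ring.
Qed.

Lemma left_inv_right n (G M : nat -> nat -> R) :
  (forall a b, (a < n)%nat -> (b < n)%nat -> G a b = G b a) ->
  (forall p q, (p < n)%nat -> (q < n)%nat -> rsum n (fun h => M p h * G h q) = kdelta p q) ->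
  forall k q, (k < n)%nat -> (q < n)%nat -> rsum n (fun j => G k j * M j q) = kdelta k q.
Proof.
  intros Hs Hl.
  assert (Msym : forall a b, (a < n)%nat -> (b < n)%nat -> M a b = M b a).
  { intros a b Ha Hb.
    transitivity (rsum n (fun c => M a c * kdelta c b)); [rewrite rsum_kdelta_r; auto|].
    transitivity (rsum n (fun c => M a c * rsum n (fun d => M b d * G d c))).
    { apply rsum_ext; intros c Hc. rewrite kdelta_sym, Hl; auto. }
    transitivity (rsum n (fun d => M b d * rsum n (fun c => M a c * G c d))).
    { transitivity (rsum n (fun c => rsum n (fun d => M a c * (M b d * G d c)))).
      { apply rsum_ext; intros c Hc. rewrite <- rsum_scal. auto. }
      rewrite rsum_swap. apply rsum_ext; intros d Hd. rewrite <- rsum_scal. apply rsum_ext; intros c Hc.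
      rewrite (Hs d c) by auto. ring. }
    transitivity (rsum n (fun d => M b d * kdelta a d)).
    { apply rsum_ext; intros d Hd. rewrite Hl; auto. }
    transitivity (rsum n (fun d => kdelta a d * M b d)).
    { apply rsum_ext; intros; ring. }
    rewrite rsum_kdelta; auto. }
  intros k q Hk Hq.
  transitivity (rsum n (fun j => M q j * G j k)).
  { apply rsum_ext; intros j Hj. rewrite Hs, Msym; auto. ring. }
  rewrite Hl; auto. apply kdelta_sym.
Qed.

Section Mink.
Variable n : nat.
Variable F : (nat -> R) -> R.
Hypothesis HM : Minkowski n F.

Definition hF (z : nat -> R) := F z ^ 2 / 2.

Lemma F_resp : resp n F.
Proof. destruct HM as [H _]. exact H. Qed.

Lemma F_Ck k : Ck n k (ND n) F.
Proof. destruct HM as [_ [H _]]. apply H. Qed.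

Lemma hF_resp : resp n hF.
Proof. intros u v H. unfold hF. rewrite (F_resp u v H). auto. Qed.

Lemma hF_Ck k : Ck n k (ND n) hF.
Proof.
  apply Ck_ext with (f := fun z => (F z * F z) * / 2).
  - intros; unfold hF; field.
  - apply (Ck_mult n); [apply (Ck_mult n); apply F_Ck| apply Ck_const].
Qed.

Lemma gten_eq i j : gten n F i j = pderiv (pderiv hF i) j.
Proof. reflexivity. Qed.

Lemma gten_resp i j : (i < n)%nat -> (j < n)%nat -> resp n (gten n F i j).
Proof. intros. rewrite gten_eq. apply pderiv_resp; auto. apply pderiv_resp; auto. apply hF_resp. Qed.

Lemma gten_Ck k i j : (i < n)%nat -> (j < n)%nat -> Ck n k (ND n) (gten n F i j).
Proof.
  intros. rewrite gten_eq. apply (Ck_pderiv n k). apply (Ck_pderiv n (S k)); auto. apply hF_Ck. auto.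
Qed.

Lemma gten_sym i j y : (i < n)%nat -> (j < n)%nat -> ND n y -> gten n F i j y = gten n F j i y.
Proof. intros. rewrite !gten_eq. apply (schwarz n); auto. apply hF_Ck. Qed.

Definition dg (a b c : nat) (y : nat -> R) := pderiv (gten n F b c) a y.

Lemma dg_sym1 a b c y : (a < n)%nat -> (b < n)%nat -> (c < n)%nat -> ND n y ->
  dg a b c y = dg a c b y.
Proof.
  intros. unfold dg. apply pderiv_ext with (n := n); auto. intros; apply gten_sym; auto.
Qed.

Lemma dg_sym2 a b c y : (a < n)%nat -> (b < n)%nat -> (c < n)%nat -> ND n y ->
  dg a b c y = dg b a c y.
Proof.
  intros. unfold dg. rewrite !gten_eq.
  rewrite (pderiv_ext n (pderiv (pderiv hF b) c) (pderiv (pderiv hF c) b) a y); auto.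
  2: { intros; apply (schwarz n); auto; apply hF_Ck. }
  rewrite (schwarz n); auto. 2: { apply (Ck_pderiv n 2). apply hF_Ck. auto. }
  apply pderiv_ext with (n := n); auto. intros; apply (schwarz n); auto; apply hF_Ck.
Qed.

Lemma ginv_right k q y : (k < n)%nat -> (q < n)%nat -> ND n y ->
  rsum n (fun j => gten n F k j y * ginv n F j q y) = kdelta k q.
Proof.
  intros Hk Hq Hy. apply (left_inv_right n (fun a b => gten n F a b y) (fun a b => ginv n F a b y)); auto.
  - intros; apply gten_sym; auto.
  - intros p r Hp Hr. unfold ginv.
    set (P := fun m : nat -> nat -> R => forall p q, (p < n)%nat -> (q < n)%nat ->
       rsum n (fun h => m p h * gten n F h q y) = kdelta p q).
    assert (Hex : exists m, P m).
    { apply LA.left_inv_exists. intros v Hv. destruct HM as [_ [_ [_ [_ Hpos]]]]. apply Hpos; auto. }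
    exact (epsilon_spec (inhabits (fun _ _ : nat => 0)) P Hex p r Hp Hr).
Qed.

End Mink.

Lemma c2_s (g : R -> R) t s : continuity_pt g s -> continuity_2d_pt (fun _ v => g v) t s.
Proof. intros H. apply (continuity_1d_2d_pt_comp g (fun _ v => v)); auto. apply continuity_2d_pt_id2. Qed.

Lemma c2_t (g : R -> R) t s : continuity_pt g t -> continuity_2d_pt (fun u _ => g u) t s.
Proof. intros H. apply (continuity_1d_2d_pt_comp g (fun u _ => u)); auto. apply continuity_2d_pt_id1. Qed.

Lemma c2_rsum n (f : nat -> R -> R -> R) t s :
  (forall i, (i < n)%nat -> continuity_2d_pt (f i) t s) ->
  continuity_2d_pt (fun u v => rsum n (fun i => f i u v)) t s.
Proof.
  induction n; intros H; simpl.
  - apply continuity_2d_pt_const.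
  - apply (continuity_2d_pt_plus (fun u v => rsum n (fun i => f i u v)) (f n)); auto.
Qed.

Lemma c2_comp n D G (Z : R -> R -> nat -> R) t s :
  cont_on n D G -> D (Z t s) ->
  (forall k, (k < n)%nat -> continuity_2d_pt (fun u v => Z u v k) t s) ->
  continuity_2d_pt (fun u v => G (Z u v)) t s.
Proof.
  intros HG HD HZ. apply (cont2d_comp n D); auto.
  intros k Hk e He. destruct (HZ k Hk (mkposreal e He)) as [d Hd].
  exists d. split; [apply cond_pos|]. intros u v Hu Hv. apply (Hd u v Hu Hv).
Qed.

Lemma c2_1d f t s : continuity_2d_pt f t s -> continuity_pt (fun v => f t v) s.
Proof.
  intros H. apply eps_cont_pt. intros e He. destruct (H (mkposreal e He)) as [d Hd].
  exists d. split; [apply cond_pos|]. intros y Hy. apply (Hd t y); auto.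
  unfold Rminus; rewrite Rplus_opp_r, Rabs_R0; apply cond_pos.
Qed.

Lemma cont_rsum n (f : nat -> R -> R) s :
  (forall i, (i < n)%nat -> continuity_pt (f i) s) ->
  continuity_pt (fun v => rsum n (fun i => f i v)) s.
Proof.
  induction n; intros H; simpl.
  - apply continuity_pt_const. intros x y; auto.
  - apply (continuity_pt_plus (fun v => rsum n (fun i => f i v)) (f n)); auto.
Qed.

Lemma dpl_rsum2 n (f : nat -> R -> R) (l : nat -> R) t :
  (forall i, (i < n)%nat -> derivable_pt_lim (f i) t (l i)) ->
  derivable_pt_lim (fun s => rsum n (fun i => f i s)) t (rsum n l).
Proof. apply dpl_rsum. Qed.

Lemma smooth1_derivs (f : R -> R) : smooth1 f ->
  forall s, derivable_pt_lim f s (deriv f s) /\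
    derivable_pt_lim (fun u => deriv f u) s (deriv (fun u => deriv f u) s) /\
    derivable_pt_lim (fun u => deriv (fun u => deriv f u) u) s
        (deriv (fun u => deriv (fun u => deriv f u) u) s) /\
    (exists l, derivable_pt_lim (fun u => deriv (fun u => deriv (fun u => deriv f u) u) u) s l).
Proof.
  intros [D [HD0 HD]] s. subst f.
  assert (Hd : forall k u, deriv (D k) u = D (S k) u) by (intros; apply deriv_eq; apply HD).
  assert (Ek : forall k, (fun u => deriv (D k) u) = D (S k)).
  { intros; apply functional_extensionality; intro; apply Hd. }
  repeat (rewrite Ek || rewrite Hd).
  split; [|split; [|split]]; try apply HD.
  exists (D 4%nat s). apply HD.
Qed.

Section Curve.
Variable n : nat.
Variable x : R -> nat -> R.
Hypothesis Hx : smooth_curve n x.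

Lemma dx i s : (i < n)%nat -> derivable_pt_lim (fun u => x u i) s (vel x s i).
Proof. intros Hi. apply (smooth1_derivs _ (Hx i Hi) s). Qed.
Lemma dvel i s : (i < n)%nat -> derivable_pt_lim (fun u => vel x u i) s (acc x s i).
Proof. intros Hi. apply (smooth1_derivs _ (Hx i Hi) s). Qed.
Lemma dacc i s : (i < n)%nat -> derivable_pt_lim (fun u => acc x u i) s (jerk x s i).
Proof. intros Hi. apply (smooth1_derivs _ (Hx i Hi) s). Qed.
Lemma cjerk i s : (i < n)%nat -> continuity_pt (fun u => jerk x u i) s.
Proof. intros Hi. destruct (smooth1_derivs _ (Hx i Hi) s) as [_ [_ [_ [l Hl]]]]. eapply dpl_cont; eauto. Qed.
Lemma cx i s : (i < n)%nat -> continuity_pt (fun u => x u i) s.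
Proof. intros; eapply dpl_cont; apply dx; auto. Qed.
Lemma cvel i s : (i < n)%nat -> continuity_pt (fun u => vel x u i) s.
Proof. intros; eapply dpl_cont; apply dvel; auto. Qed.
Lemma cacc i s : (i < n)%nat -> continuity_pt (fun u => acc x u i) s.
Proof. intros; eapply dpl_cont; apply dacc; auto. Qed.
End Curve.

Lemma c1_comp n D G (z : R -> nat -> R) s :
  cont_on n D G -> D (z s) ->
  (forall k, (k < n)%nat -> continuity_pt (fun u => z u k) s) ->
  continuity_pt (fun u => G (z u)) s.
Proof.
  intros HG HD Hz.
  pose proof (c2_comp n D G (fun _ v => z v) 0 s HG HD) as H.
  apply (c2_1d (fun _ v => G (z v)) 0 s). apply H.
  intros k Hk. apply (c2_s (fun v => z v k)). auto.
Qed.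

Lemma Rint_RInt f a b : ex_RInt f a b -> Rint f a b = RInt f a b.
Proof.
  intros H. pose proof (ex_RInt_Reals_0 f a b H) as pr.
  rewrite (RInt_Reals f a b pr). unfold Rint.
  assert (Hex : exists I, exists pr : Riemann_integrable f a b, RiemannInt pr = I) by (exists (RiemannInt pr); exists pr; auto).
  destruct (epsilon_spec (inhabits 0) _ Hex) as [pr2 Hpr2].
  rewrite <- Hpr2. apply RiemannInt_P5.
Qed.

Lemma cont_continuous f x : continuity_pt f x -> continuous f x.
Proof. intros H. apply continuity_pt_filterlim. auto. Qed.

Section Var.
Variable n : nat.
Variable F : (nat -> R) -> R.
Variables a b : R.
Variable x : R -> nat -> R.
Hypothesis HM : Minkowski n F.
Hypothesis Hab : a < b.
Hypothesis Hx : smooth_curve n x.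
Hypothesis Hus : unit_speed n F a b x.
Variable V : R -> nat -> R.
Hypothesis HV : smooth_curve n V.

Lemma F_zero : F (fun _ => 0) = 0.
Proof.
  destruct HM as [_ [_ [_ [Hh _]]]].
  pose proof (Hh 2 (fun _ => 0) ltac:(lra)) as H. cbv beta in H.
  replace (fun _ : nat => 2 * 0) with (fun _ : nat => 0) in H
    by (apply functional_extensionality; intros; ring).
  lra.
Qed.

Lemma Y_ND s : a <= s <= b -> ND n (vel x s).
Proof.
  intros Hs. unfold ND. apply NNPP. intros Hn.
  assert (H0 : forall i, (i < n)%nat -> vel x s i = 0).
  { intros i Hi. apply NNPP. intro Hne. apply Hn. exists i; auto. }
  pose proof (Hus s Hs) as H1.
  rewrite (F_resp n F HM (vel x s) (fun _ => 0) H0), F_zero in H1. lra.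
Qed.

Definition Zv t s := fun k => vel x s k + t * vel V s k.
Definition Av t s := fun k => acc x s k + t * acc V s k.
Definition Lint t s := rsum n (fun i => rsum n (fun j => gten n F i j (Zv t s) * Av t s i * Av t s j)).

Lemma vel_var t s i : (i < n)%nat -> vel (fun s i => x s i + t * V s i) s i = Zv t s i.
Proof.
  intros Hi. unfold vel at 1. apply deriv_eq. unfold Zv.
  apply (derivable_pt_lim_plus (fun u => x u i) (fun u => t * V u i)).
  - apply (dx n); auto.
  - apply (derivable_pt_lim_scal (fun u => V u i)). apply (dx n); auto.
Qed.

Lemma acc_var t s i : (i < n)%nat -> acc (fun s i => x s i + t * V s i) s i = Av t s i.
Proof.
  intros Hi. unfold acc at 1.
  replace (fun u => vel (fun s i => x s i + t * V s i) u i) with (fun u => Zv t u i)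
    by (apply functional_extensionality; intro u; rewrite vel_var; auto).
  apply deriv_eq. unfold Zv, Av.
  apply (derivable_pt_lim_plus (fun u => vel x u i) (fun u => t * vel V u i)).
  - apply (dvel n); auto.
  - apply (derivable_pt_lim_scal (fun u => vel V u i)). apply (dvel n); auto.
Qed.

Lemma E2_eq t : E2 n F a b (fun s i => x s i + t * V s i) = /2 * Rint (Lint t) a b.
Proof.
  unfold E2. f_equal. f_equal. apply functional_extensionality; intro s.
  unfold Lint. apply rsum_ext; intros i Hi. apply rsum_ext; intros j Hj.
  rewrite !acc_var by auto.
  rewrite (gten_resp n F HM i j Hi Hj _ (Zv t s)); auto.
  intros k Hk. apply vel_var; auto.
Qed.

Lemma Zt0 s : Zv 0 s = vel x s.
Proof. apply functional_extensionality; intro k. unfold Zv. ring. Qed.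
Lemma At0 s : Av 0 s = acc x s.
Proof. apply functional_extensionality; intro k. unfold Av. ring. Qed.

Lemma rsum_nonneg m (f : nat -> R) : (forall i, (i < m)%nat -> 0 <= f i) -> 0 <= rsum m f.
Proof. induction m; simpl; intros H; [lra|]. pose proof (H m ltac:(lia)). pose proof (IHm ltac:(intros; apply H; lia)). lra. Qed.

Lemma rsum_sq_pos m (v : nat -> R) : (exists i, (i < m)%nat /\ v i <> 0) -> 0 < rsum m (fun k => v k * v k).
Proof.
  induction m; intros [i [Hi Hv]]; [lia|]. simpl.
  destruct (Nat.eq_dec i m).
  - subst. assert (0 < v m * v m) by (apply Rsqr_pos_lt; auto).
    pose proof (rsum_nonneg m (fun k => v k * v k) ltac:(intros; apply Rle_0_sqr)). lra.
  - assert (0 < rsum m (fun k => v k * v k)) by (apply IHm; exists i; split; auto; lia).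
    pose proof (Rle_0_sqr (v m)). unfold Rsqr in *. lra.
Qed.

Lemma not_ND_zero (z : nat -> R) : ~ ND n z -> forall k, (k < n)%nat -> z k = 0.
Proof. intros H k Hk. apply NNPP. intro Hne. apply H. exists k; auto. Qed.

Lemma unif_t0 : exists t0, 0 < t0 /\ forall t s, Rabs t < t0 -> a <= s <= b -> ND n (Zv t s).
Proof.
  destruct (continuity_ab_min (fun s => rsum n (fun k => vel x s k * vel x s k)) a b) as [smin [Hmin Hsmin]].
  { lra. }
  { intros c Hc. apply cont_rsum. intros i Hi. apply continuity_pt_mult; apply (cvel n); auto. }
  destruct (continuity_ab_maj (fun s => rsum n (fun k => vel V s k * vel V s k)) a b) as [smax [Hmax Hsmax]].
  { lra. }
  { intros c Hc. apply cont_rsum. intros i Hi. apply continuity_pt_mult; apply (cvel n); auto. }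
  set (mu := rsum n (fun k => vel x smin k * vel x smin k)).
  set (K := rsum n (fun k => vel V smax k * vel V smax k)).
  assert (Hmu : 0 < mu) by (apply rsum_sq_pos; apply Y_ND; auto).
  assert (HK : 0 <= K) by (apply rsum_nonneg; intros; apply Rle_0_sqr).
  exists (Rmin 1 (mu / (K + 1))). split.
  { apply Rmin_pos; [lra| apply Rdiv_lt_0_compat; lra]. }
  intros t s Ht Hs. apply NNPP. intros HN.
  pose proof (not_ND_zero _ HN) as H0.
  assert (Hm : rsum n (fun k => vel x s k * vel x s k) = t * t * rsum n (fun k => vel V s k * vel V s k)).
  { rewrite <- rsum_scal. apply rsum_ext. intros k Hk. specialize (H0 k Hk). unfold Zv in H0.
    replace (vel x s k) with (- (t * vel V s k)) by lra. ring. }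
  specialize (Hmin s Hs). specialize (Hmax s Hs). fold mu K in Hmin, Hmax.
  assert (Ht1 : Rabs t < 1) by (eapply Rlt_le_trans; [exact Ht| apply Rmin_l]).
  assert (Ht2 : Rabs t < mu / (K + 1)) by (eapply Rlt_le_trans; [exact Ht| apply Rmin_r]).
  assert (Htt : t * t <= Rabs t).
  { assert (E : t * t = Rabs t * Rabs t) by (rewrite <- Rabs_mult; rewrite Rabs_pos_eq; [ring|apply Rle_0_sqr]).
    rewrite E. pose proof (Rabs_pos t). nra. }
  assert (HtK : t * t * K <= Rabs t * K) by (apply Rmult_le_compat_r; auto).
  assert (Rabs t * K <= mu / (K + 1) * K) by (apply Rmult_le_compat_r; lra).
  assert (mu / (K + 1) * K < mu).
  { apply Rmult_lt_reg_r with (K + 1); [lra|]. field_simplify; [|lra]. nra. }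
  assert (t * t * rsum n (fun k => vel V s k * vel V s k) <= t * t * K).
  { apply Rmult_le_compat_l; auto. apply Rle_0_sqr. }
  lra.
Qed.

Definition DL t s := rsum n (fun i => rsum n (fun j =>
  rsum n (fun k => dg n F k i j (Zv t s) * vel V s k) * Av t s i * Av t s j
  + gten n F i j (Zv t s) * acc V s i * Av t s j
  + gten n F i j (Zv t s) * Av t s i * acc V s j)).


Lemma dpl_affine c d t : derivable_pt_lim (fun u => c + u * d) t d.
Proof.
  intros eps Heps. exists (mkposreal 1 Rlt_0_1). intros h Hh _.
  replace ((c + (t + h) * d - (c + t * d)) / h - d) with 0 by (field; auto).
  rewrite Rabs_R0; auto.
Qed.

Lemma dpl_eq f t l l' : derivable_pt_lim f t l -> l = l' -> derivable_pt_lim f t l'.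
Proof. intros H ->; auto. Qed.

Lemma dLint t s : ND n (Zv t s) -> derivable_pt_lim (fun u => Lint u s) t (DL t s).
Proof.
  intros HND. unfold Lint, DL.
  apply dpl_rsum; intros i Hi. apply dpl_rsum; intros j Hj.
  assert (Hg := chain n (gten n F i j) (fun u => Zv u s) t (fun k => vel V s k)
     (gten_Ck n F HM 1 i j Hi Hj) (gten_resp n F HM i j Hi Hj) HND
     (fun k _ => dpl_affine (vel x s k) (vel V s k) t)).
  assert (HA : forall k, derivable_pt_lim (fun u => Av u s k) t (acc V s k)).
  { intros k. apply dpl_affine. }
  eapply dpl_eq.
  - apply (derivable_pt_lim_mult (fun u => gten n F i j (Zv u s) * Av u s i) (fun u => Av u s j)); [|apply HA].
    apply (derivable_pt_lim_mult (fun u => gten n F i j (Zv u s)) (fun u => Av u s i)); [apply Hg| apply HA].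
  - unfold dg. ring.
Qed.

Lemma cZ k t s : (k < n)%nat -> continuity_2d_pt (fun u v => Zv u v k) t s.
Proof.
  intros Hk. unfold Zv.
  apply (continuity_2d_pt_plus (fun _ v => vel x v k) (fun u v => u * vel V v k)).
  - apply (c2_s (fun v => vel x v k)). apply (cvel n); auto.
  - apply (continuity_2d_pt_mult (fun u _ => u) (fun _ v => vel V v k)).
    + apply continuity_2d_pt_id1.
    + apply (c2_s (fun v => vel V v k)). apply (cvel n); auto.
Qed.

Lemma cA k t s : (k < n)%nat -> continuity_2d_pt (fun u v => Av u v k) t s.
Proof.
  intros Hk. unfold Av.
  apply (continuity_2d_pt_plus (fun _ v => acc x v k) (fun u v => u * acc V v k)).
  - apply (c2_s (fun v => acc x v k)). apply (cacc n); auto.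
  - apply (continuity_2d_pt_mult (fun u _ => u) (fun _ v => acc V v k)).
    + apply continuity_2d_pt_id1.
    + apply (c2_s (fun v => acc V v k)). apply (cacc n); auto.
Qed.

Lemma cgZ i j t s : (i < n)%nat -> (j < n)%nat -> ND n (Zv t s) ->
  continuity_2d_pt (fun u v => gten n F i j (Zv u v)) t s.
Proof.
  intros Hi Hj HND. apply (c2_comp n (ND n)); auto.
  - apply (Ck_cont n 0). apply gten_Ck; auto.
  - intros; apply cZ; auto.
Qed.

Lemma cdgZ k i j t s : (k < n)%nat -> (i < n)%nat -> (j < n)%nat -> ND n (Zv t s) ->
  continuity_2d_pt (fun u v => dg n F k i j (Zv u v)) t s.
Proof.
  intros Hk Hi Hj HND. apply (c2_comp n (ND n)); auto.
  - apply (Ck_cont n 0). apply (Ck_pderiv n 0); auto. apply gten_Ck; auto.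
  - intros; apply cZ; auto.
Qed.

Lemma cLint t s : ND n (Zv t s) -> continuity_2d_pt Lint t s.
Proof.
  intros HND. unfold Lint.
  apply (c2_rsum n (fun i u v => rsum n (fun j => gten n F i j (Zv u v) * Av u v i * Av u v j))). intros i Hi.
  apply (c2_rsum n (fun j u v => gten n F i j (Zv u v) * Av u v i * Av u v j)). intros j Hj.
  apply (continuity_2d_pt_mult (fun u v => gten n F i j (Zv u v) * Av u v i) (fun u v => Av u v j)); [|apply cA; auto].
  apply (continuity_2d_pt_mult (fun u v => gten n F i j (Zv u v)) (fun u v => Av u v i)); [|apply cA; auto].
  apply cgZ; auto.
Qed.

Lemma cDL t s : ND n (Zv t s) -> continuity_2d_pt DL t s.
Proof.
  intros HND. unfold DL.
  apply (c2_rsum n (fun i u v => rsum n (fun j =>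
    rsum n (fun k => dg n F k i j (Zv u v) * vel V v k) * Av u v i * Av u v j
    + gten n F i j (Zv u v) * acc V v i * Av u v j
    + gten n F i j (Zv u v) * Av u v i * acc V v j))). intros i Hi.
  apply (c2_rsum n (fun j u v =>
    rsum n (fun k => dg n F k i j (Zv u v) * vel V v k) * Av u v i * Av u v j
    + gten n F i j (Zv u v) * acc V v i * Av u v j
    + gten n F i j (Zv u v) * Av u v i * acc V v j)). intros j Hj.
  assert (HV2 : forall k, (k < n)%nat -> continuity_2d_pt (fun _ v => acc V v k) t s).
  { intros k Hk. apply (c2_s (fun v => acc V v k)). apply (cacc n); auto. }
  assert (Hs : continuity_2d_pt (fun u v => rsum n (fun k => dg n F k i j (Zv u v) * vel V v k)) t s).
  { apply (c2_rsum n (fun k u v => dg n F k i j (Zv u v) * vel V v k)). intros k Hk.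
    apply (continuity_2d_pt_mult (fun u v => dg n F k i j (Zv u v)) (fun _ v => vel V v k)).
    - apply cdgZ; auto.
    - apply (c2_s (fun v => vel V v k)). apply (cvel n); auto. }
  apply continuity_2d_pt_plus; [apply continuity_2d_pt_plus|];
  repeat apply continuity_2d_pt_mult; auto using cA, cgZ.
Qed.



Lemma ND_Z0 s : a <= s <= b -> ND n (Zv 0 s).
Proof. intros. rewrite Zt0. apply Y_ND; auto. Qed.

Lemma ND_loc t s : ND n (Zv t s) -> locally_2d (fun u v => ND n (Zv u v)) t s.
Proof.
  intros HND. destruct (nonzero_open n (Zv t s) HND) as [r [Hr Hop]].
  destruct (fin_delta n (fun k d => forall u v, Rabs (u - t) < d -> Rabs (v - s) < d ->
              Rabs (Zv u v k - Zv t s k) < r)) as [d [Hd Hdd]].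
  { intros k d d' _ Hd' H u v Hu Hv. apply H; lra. }
  { intros k Hk. destruct (cZ k t s Hk (mkposreal r Hr)) as [d Hd]. exists d. split; [apply cond_pos|].
    intros u v Hu Hv. apply (Hd u v Hu Hv). }
  exists (mkposreal d Hd). intros u v Hu Hv. apply Hop. intros k Hk. apply Hdd; auto.
Qed.

Lemma first_var :
  derivable_pt_lim (fun t => E2 n F a b (fun s i => x s i + t * V s i)) 0 (/2 * RInt (DL 0) a b).
Proof.
  destruct unif_t0 as [t0 [Ht0 Hunif]].
  assert (Hmin : Rmin a b = a) by (apply Rmin_left; lra).
  assert (Hmax : Rmax a b = b) by (apply Rmax_right; lra).
  assert (HexR : forall t, Rabs t < t0 -> ex_RInt (Lint t) a b).
  { intros t Ht. apply (ex_RInt_continuous (V := R_CompleteNormedModule)). rewrite Hmin, Hmax. intros z Hz.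
    apply cont_continuous. apply (c2_1d Lint t z). apply cLint. apply Hunif; auto. }
  apply dpl_local with (f := fun t => /2 * RInt (Lint t) a b).
  { exists t0. split; auto. intros u Hu. rewrite Rminus_0_r in Hu.
    rewrite E2_eq. rewrite Rint_RInt; auto. }
  apply (derivable_pt_lim_scal (fun t => RInt (Lint t) a b)).
  apply is_derive_Reals.
  assert (HRD : RInt (DL 0) a b = RInt (fun s => Derive (fun u => Lint u s) 0) a b).
  { apply RInt_ext. rewrite Hmin, Hmax. intros z Hz. symmetry. apply dpl_Derive.
    apply dLint. apply ND_Z0. lra. }
  rewrite HRD.
  apply (is_derive_RInt_param (fun u s => Lint u s) a b 0).
  - apply (loc_R 0 t0); auto. intros u Hu s' Hs'. rewrite Rminus_0_r in Hu.
    rewrite Hmin, Hmax in Hs'. eapply dpl_ex_derive. apply dLint. apply Hunif; auto.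
  - intros s' Hs'. rewrite Hmin, Hmax in Hs'.
    apply continuity_2d_pt_ext_loc with (f := DL).
    + destruct (ND_loc 0 s' (ND_Z0 s' Hs')) as [d Hd]. exists d. intros u v Hu Hv.
      symmetry. apply dpl_Derive. apply dLint. apply Hd; auto.
    + apply cDL. apply ND_Z0; auto.
  - apply (loc_R 0 t0); auto. intros u Hu. rewrite Rminus_0_r in Hu. apply HexR; auto.
Qed.
End Var.

Ltac rext := apply rsum_ext; intros.

Section Alg.
Variable n : nat.
Variables (g : nat -> nat -> R) (d : nat -> nat -> nat -> R) (M : nat -> nat -> R) (T J V1 V2 : nat -> R).
Hypothesis Hg : forall i j, (i < n)%nat -> (j < n)%nat -> g i j = g j i.
Hypothesis Hd : forall l i j, (l < n)%nat -> (i < n)%nat -> (j < n)%nat -> d l i j = d i l j.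
Hypothesis HM : forall k m, (k < n)%nat -> (m < n)%nat -> rsum n (fun j => g k j * M j m) = kdelta k m.

Let X1 := rsum n (fun k => V1 k * rsum n (fun i => rsum n (fun j => d k i j * T i * T j))).
Let X2 := rsum n (fun i => V2 i * rsum n (fun j => g i j * T j)).

Lemma alg_lhs :
  / 2 * rsum n (fun i => rsum n (fun j => rsum n (fun k => d k i j * V1 k) * T i * T j
     + g i j * V2 i * T j + g i j * T i * V2 j)) = / 2 * X1 + X2.
Proof.
  rewrite (rsum_ext n _ (fun i => rsum n (fun j => rsum n (fun k => d k i j * V1 k) * T i * T j)
     + rsum n (fun j => g i j * V2 i * T j) + rsum n (fun j => g i j * T i * V2 j))).
  2: { intros i Hi. rewrite <- !rsum_plus. auto. }
  rewrite !rsum_plus.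
  assert (E1 : rsum n (fun i => rsum n (fun j => rsum n (fun k => d k i j * V1 k) * T i * T j)) = X1).
  { unfold X1.
    transitivity (rsum n (fun i => rsum n (fun j => rsum n (fun k => V1 k * (d k i j * T i * T j))))).
    { rext. rext. rewrite <- rsum_scalr, <- rsum_scalr. rext. ring. }
    transitivity (rsum n (fun i => rsum n (fun k => rsum n (fun j => V1 k * (d k i j * T i * T j))))).
    { rext. apply rsum_swap. }
    rewrite rsum_swap. rext. rewrite <- rsum_scal. rext. rewrite <- rsum_scal. auto. }
  assert (E2 : rsum n (fun i => rsum n (fun j => g i j * V2 i * T j)) = X2).
  { unfold X2. rext. rewrite <- rsum_scal. rext. ring. }
  assert (E3 : rsum n (fun i => rsum n (fun j => g i j * T i * V2 j)) = X2).
  { unfold X2. rewrite rsum_swap. rext. rewrite <- rsum_scal. rext. rewrite Hg; auto. ring. }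
  rewrite E1, E2, E3. field.
Qed.

Lemma alg_H1 k : (k < n)%nat ->
  rsum n (fun j => g k j * rsum n (fun h => rsum n (fun l => (/2 * rsum n (fun m => M j m * d l m h)) * T h * T l)))
  = / 2 * rsum n (fun h => rsum n (fun l => d l k h * T h * T l)).
Proof.
  intros Hk.
  transitivity (rsum n (fun j => rsum n (fun h => rsum n (fun l =>
       / 2 * rsum n (fun m => g k j * M j m * d l m h) * T h * T l)))).
  { rext. rewrite <- rsum_scal. rext. rewrite <- rsum_scal. rext.
    rewrite (rsum_ext n (fun m => g k i * M i m * d i1 m i0) (fun m => g k i * (M i m * d i1 m i0))) by (intros; ring).
    rewrite rsum_scal. ring. }
  rewrite rsum_swap. rewrite <- rsum_scal. rext.
  rewrite rsum_swap. rewrite <- rsum_scal. rext.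
  transitivity (/ 2 * rsum n (fun m => rsum n (fun j => g k j * M j m * d i0 m i)) * T i * T i0).
  { rewrite (rsum_swap n n (fun m j => g k j * M j m * d i0 m i)).
    rewrite <- rsum_scal, <- rsum_scalr, <- rsum_scalr. rext. ring. }
  rewrite (rsum_ext n _ (fun m => kdelta k m * d i0 m i)).
  2: { intros m Hm. rewrite <- (HM k m) by auto. rewrite <- rsum_scalr. rext. ring. }
  rewrite rsum_kdelta by auto. ring.
Qed.

Lemma alg :
  / 2 * rsum n (fun i => rsum n (fun j => rsum n (fun k => d k i j * V1 k) * T i * T j
     + g i j * V2 i * T j + g i j * T i * V2 j))
  = rsum n (fun k => (rsum n (fun j => rsum n (fun l => d l k j * T l) * T j + g k j * J j) * V1 k
                      + rsum n (fun j => g k j * T j) * V2 k))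
    - rsum n (fun k => rsum n (fun j => g k j * (J j + rsum n (fun h => rsum n (fun l =>
         (/2 * rsum n (fun m => M j m * d l m h)) * T h * T l)))) * V1 k).
Proof.
  rewrite alg_lhs. rewrite <- rsum_minus.
  unfold X1, X2. rewrite <- rsum_scal, <- rsum_plus.
  rext. rename i into k.
  rewrite (rsum_ext n (fun j => g k j * (J j + _)) (fun j => g k j * J j + g k j * rsum n (fun h => rsum n (fun l =>
         (/2 * rsum n (fun m => M j m * d l m h)) * T h * T l)))) by (intros; ring).
  rewrite (rsum_plus n (fun j => g k j * J j) (fun j => g k j * rsum n (fun h => rsum n (fun l =>
         (/2 * rsum n (fun m => M j m * d l m h)) * T h * T l)))).
  rewrite alg_H1 by auto.
  rewrite (rsum_ext n (fun j => rsum n (fun l => d l k j * T l) * T j + g k j * J j)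
     (fun j => rsum n (fun l => d l k j * T l * T j) + g k j * J j)).
  2: { intros; rewrite <- rsum_scalr; auto. }
  rewrite (rsum_plus n (fun j => rsum n (fun l => d l k j * T l * T j)) (fun j => g k j * J j)).
  assert (E : rsum n (fun j => rsum n (fun l => d l k j * T l * T j)) = rsum n (fun i => rsum n (fun j => d k i j * T i * T j))).
  { rewrite rsum_swap. rext. rext. rewrite Hd; auto. }
  assert (E' : rsum n (fun h => rsum n (fun l => d l k h * T h * T l)) = rsum n (fun i => rsum n (fun j => d k i j * T i * T j))).
  { rewrite <- E. rext. rext. ring. }
  rewrite E, E'. field.
Qed.
End Alg.

Definition Wf n F x s k := rsum n (fun j => gten n F k j (vel x s) * Dtau n F x s j).
Definition Pf n F x s k := rsum n (fun j => gten n F k j (vel x s) * acc x s j).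
Definition Pdf n F x s k := rsum n (fun j => rsum n (fun l => dg n F l k j (vel x s) * acc x s l) * acc x s j
                                 + gten n F k j (vel x s) * jerk x s j).

Lemma RInt_minus_R (f g : R -> R) a b : ex_RInt f a b -> ex_RInt g a b ->
  RInt (fun s => f s - g s) a b = RInt f a b - RInt g a b.
Proof. intros Hf Hg. exact (RInt_minus f g a b Hf Hg). Qed.

Lemma RInt_scal_R (f : R -> R) a b c : ex_RInt f a b ->
  RInt (fun s => c * f s) a b = c * RInt f a b.
Proof. intros Hf. exact (RInt_scal f a b c Hf). Qed.

Lemma ex_RInt_scal_R (f : R -> R) a b c : ex_RInt f a b -> ex_RInt (fun s => c * f s) a b.
Proof. intros Hf. exact (ex_RInt_scal f a b c Hf). Qed.

Section Var2.
Variable n : nat.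
Variable F : (nat -> R) -> R.
Variables a b : R.
Variable x : R -> nat -> R.
Hypothesis HM : Minkowski n F.
Hypothesis Hab : a < b.
Hypothesis Hx : smooth_curve n x.
Hypothesis Hus : unit_speed n F a b x.
Variable V : R -> nat -> R.
Hypothesis HV : smooth_curve n V.

Definition Gf s := rsum n (fun k => Pf n F x s k * vel V s k).
Definition Gd s := rsum n (fun k => Pdf n F x s k * vel V s k + Pf n F x s k * acc V s k).

Lemma pointwise s : ND n (vel x s) ->
  / 2 * DL n F x V 0 s = Gd s - rsum n (fun k => Wf n F x s k * vel V s k).
Proof.
  intros HND. unfold DL. rewrite Zt0, At0.
  exact (alg n (fun i j => gten n F i j (vel x s)) (fun l i j => dg n F l i j (vel x s))
     (fun i j => ginv n F i j (vel x s)) (acc x s) (jerk x s) (vel V s) (acc V s)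
     (fun i j Hi Hj => gten_sym n F HM i j (vel x s) Hi Hj HND)
     (fun l i j Hl Hi Hj => dg_sym2 n F HM l i j (vel x s) Hl Hi Hj HND)
     (fun k m Hk Hm => ginv_right n F HM k m (vel x s) Hk Hm HND)).
Qed.

Lemma dG s : ND n (vel x s) -> derivable_pt_lim Gf s (Gd s).
Proof.
  intros HND. unfold Gf, Gd.
  apply dpl_rsum; intros k Hk.
  apply (derivable_pt_lim_mult (fun u => Pf n F x u k) (fun u => vel V u k)); [|apply (dvel n); auto].
  unfold Pf, Pdf. apply dpl_rsum; intros j Hj.
  apply (derivable_pt_lim_mult (fun u => gten n F k j (vel x u)) (fun u => acc x u j)); [|apply (dacc n); auto].
  eapply dpl_eq.
  - apply (chain n (gten n F k j) (fun u => vel x u) s (fun l => acc x s l)); auto.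
    + apply gten_Ck; auto.
    + apply gten_resp; auto.
    + intros i Hi. apply (dvel n); auto.
  - unfold dg. apply rsum_ext. intros; ring.
Qed.

Lemma cGd s : ND n (vel x s) -> continuity_pt Gd s.
Proof.
  intros HND. unfold Gd, Pdf, Pf.
  assert (Cg : forall i j, (i < n)%nat -> (j < n)%nat -> continuity_pt (fun u => gten n F i j (vel x u)) s).
  { intros i j Hi Hj. apply (c1_comp n (ND n)); auto.
    - apply (Ck_cont n 0). apply gten_Ck; auto.
    - intros; apply (cvel n); auto. }
  assert (Cd : forall l i j, (l < n)%nat -> (i < n)%nat -> (j < n)%nat -> continuity_pt (fun u => dg n F l i j (vel x u)) s).
  { intros l i j Hl Hi Hj. apply (c1_comp n (ND n)); auto.
    - apply (Ck_cont n 0). apply (Ck_pderiv n 0); auto. apply gten_Ck; auto.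
    - intros; apply (cvel n); auto. }
  apply cont_rsum; intros k Hk.
  apply (continuity_pt_plus (fun u => _ * vel V u k) (fun u => _ * acc V u k)).
  - apply (continuity_pt_mult _ (fun u => vel V u k)); [|apply (cvel n); auto].
    apply cont_rsum; intros j Hj.
    apply (continuity_pt_plus (fun u => _ * acc x u j) (fun u => _ * jerk x u j)).
    + apply (continuity_pt_mult _ (fun u => acc x u j)); [|apply (cacc n); auto].
      apply cont_rsum; intros l Hl.
      apply (continuity_pt_mult _ (fun u => acc x u l)); [apply Cd; auto|apply (cacc n); auto].
    + apply (continuity_pt_mult _ (fun u => jerk x u j)); [apply Cg; auto|apply (cjerk n); auto].
  - apply (continuity_pt_mult _ (fun u => acc V u k)); [|apply (cacc n); auto].
    apply cont_rsum; intros j Hj.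
    apply (continuity_pt_mult _ (fun u => acc x u j)); [apply Cg; auto|apply (cacc n); auto].
Qed.

Lemma var_formula : (forall i, (i < n)%nat -> vel V a i = 0 /\ vel V b i = 0) ->
  / 2 * RInt (DL n F x V 0) a b = - RInt (fun s => rsum n (fun k => Wf n F x s k * vel V s k)) a b.
Proof.
  intros Hend.
  assert (Hmin : Rmin a b = a) by (apply Rmin_left; lra).
  assert (Hmax : Rmax a b = b) by (apply Rmax_right; lra).
  assert (HND : forall s, a <= s <= b -> ND n (vel x s)) by (intros; apply (Y_ND n F a b x HM Hus); auto).
  assert (ExD : ex_RInt (DL n F x V 0) a b).
  { apply (ex_RInt_continuous (V := R_CompleteNormedModule)). rewrite Hmin, Hmax. intros z Hz.
    apply cont_continuous. apply (c2_1d (DL n F x V) 0 z). apply cDL; auto.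
    apply (ND_Z0 n F a b x HM Hus); auto. }
  assert (ExG : ex_RInt Gd a b).
  { apply (ex_RInt_continuous (V := R_CompleteNormedModule)). rewrite Hmin, Hmax. intros z Hz.
    apply cont_continuous. apply cGd; auto. }
  assert (IG : RInt Gd a b = Gf b - Gf a).
  { apply is_RInt_unique. apply (is_RInt_derive (V := R_CompleteNormedModule)); rewrite Hmin, Hmax.
    - intros z Hz. apply is_derive_Reals. apply dG; auto.
    - intros z Hz. apply cont_continuous. apply cGd; auto. }
  assert (G0 : forall s, (forall i, (i < n)%nat -> vel V s i = 0) -> Gf s = 0).
  { intros s H. unfold Gf. rewrite (rsum_ext n _ (fun _ => 0)); [apply rsum_zero|].
    intros k Hk. rewrite H; auto; ring. }
  rewrite G0 in IG by (intros; apply Hend; auto).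
  rewrite G0 in IG by (intros; apply Hend; auto).
  rewrite (RInt_ext (fun s => rsum n (fun k => Wf n F x s k * vel V s k)) (fun s => Gd s - / 2 * DL n F x V 0 s)).
  2: { rewrite Hmin, Hmax. intros z Hz. assert (Hp := pointwise z ltac:(apply HND; lra)). assert (E : rsum n (fun k => Wf n F x z k * vel V z k) = Gd z - / 2 * DL n F x V 0 z) by (rewrite Hp; ring). exact E. }
  rewrite RInt_minus_R; auto.
  2: { apply ex_RInt_scal_R; auto. }
  rewrite RInt_scal_R; auto. rewrite IG. ring.
Qed.
End Var2.

Lemma dpl_eq' f t l l' : derivable_pt_lim f t l -> l = l' -> derivable_pt_lim f t l'.
Proof. intros H ->; auto. Qed.

Lemma dpl_affine_gen c d t : derivable_pt_lim (fun u => c * u + d) t c.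
Proof.
  intros eps Heps. exists (mkposreal 1 Rlt_0_1). intros h Hh _.
  replace ((c * (t + h) + d - (c * t + d)) / h - c) with 0 by (field; auto).
  rewrite Rabs_R0; auto.
Qed.

Fixpoint Cn (k : nat) (f : R -> R) : Prop :=
  match k with
  | O => True
  | S k => exists f', (forall t, derivable_pt_lim f t (f' t)) /\ Cn k f'
  end.

Definition Cinf f := forall k, Cn k f.

Fixpoint iderv (k : nat) (f : R -> R) : R -> R :=
  match k with O => f | S k => iderv k (fun t => deriv f t) end.

Lemma iderv_dpl k : forall f, Cn (S k) f -> forall t, derivable_pt_lim (iderv k f) t (iderv (S k) f t).
Proof.
  induction k; intros f [f' [Hd Hc]] t.
  - simpl. rewrite (deriv_eq f t (f' t)); auto.
  - assert (E : (fun t => deriv f t) = f').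
    { apply functional_extensionality; intro u. apply deriv_eq; auto. }
    change (iderv (S k) f) with (iderv k (fun t => deriv f t)).
    change (iderv (S (S k)) f t) with (iderv (S k) (fun t => deriv f t) t).
    rewrite E. apply IHk. auto.
Qed.

Lemma Cinf_smooth1 f : Cinf f -> smooth1 f.
Proof.
  intros H. exists (fun k => iderv k f). split; auto.
  intros k t. apply iderv_dpl. apply H.
Qed.

Lemma Cn_mono k : forall f, Cn (S k) f -> Cn k f.
Proof.
  induction k; intros f H; simpl; auto.
  destruct H as [f' [Hd Hc]]. exists f'. split; auto.
Qed.

Lemma Cn_ext k f g : (forall t, f t = g t) -> Cn k f -> Cn k g.
Proof. intros H. replace g with f; auto. apply functional_extensionality; auto. Qed.

Lemma Cn_const k c : Cn k (fun _ => c).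
Proof.
  revert c; induction k; intros c; simpl; auto.
  exists (fun _ => 0). split; auto. intros; apply derivable_pt_lim_const.
Qed.

Lemma Cn_id k : Cn k (fun t => t).
Proof.
  destruct k; simpl; auto. exists (fun _ => 1). split; [intros; apply derivable_pt_lim_id| apply Cn_const].
Qed.

Lemma Cn_plus k : forall f g, Cn k f -> Cn k g -> Cn k (fun t => f t + g t).
Proof.
  induction k; intros f g Hf Hg; simpl; auto.
  destruct Hf as [f' [Hf1 Hf2]], Hg as [g' [Hg1 Hg2]].
  exists (fun t => f' t + g' t). split; auto.
  intros t. apply (derivable_pt_lim_plus f g); auto.
Qed.

Lemma Cn_mult k : forall f g, Cn k f -> Cn k g -> Cn k (fun t => f t * g t).
Proof.
  induction k; intros f g Hf Hg; simpl; auto.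
  pose proof (Cn_mono k f Hf) as Hfm. pose proof (Cn_mono k g Hg) as Hgm.
  destruct Hf as [f' [Hf1 Hf2]], Hg as [g' [Hg1 Hg2]].
  exists (fun t => f' t * g t + f t * g' t). split.
  - intros t. apply (derivable_pt_lim_mult f g); auto.
  - apply Cn_plus; apply IHk; auto.
Qed.

Lemma Cn_inv k : forall f, Cn k f -> (forall t, f t <> 0) -> Cn k (fun t => / f t).
Proof.
  induction k; intros f Hf Hnz; simpl; auto.
  pose proof (Cn_mono k f Hf) as Hfm.
  destruct Hf as [f' [Hf1 Hf2]].
  exists (fun t => - f' t * (/ f t * / f t)). split.
  - intros t. pose proof (derivable_pt_lim_div (fun _ => 1) f t 0 (f' t) (derivable_pt_lim_const 1 t) (Hf1 t) (Hnz t)) as H.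
    eapply dpl_eq'.
    + eapply dpl_ext; [|exact H]. intros u. unfold div_fct. field. auto.
    + unfold Rsqr. field. auto.
  - apply Cn_mult; [apply (Cn_ext k (fun t => -1 * f' t)); [intros; ring|apply Cn_mult; auto; apply Cn_const]|].
    apply Cn_mult; apply IHk; auto.
Qed.

Lemma Cn_affine k : forall f c d, Cn k f -> Cn k (fun t => f (c * t + d)).
Proof.
  induction k; intros f c d Hf; simpl; auto.
  destruct Hf as [f' [Hf1 Hf2]].
  exists (fun t => c * f' (c * t + d)). split.
  - intros t. eapply dpl_eq'.
    + apply (derivable_pt_lim_comp (fun t => c * t + d) f t c).
      * apply dpl_affine_gen.
      * apply Hf1.
    + ring.
  - apply Cn_mult; [apply Cn_const| apply IHk; auto].
Qed.

Inductive Poly : (R -> R) -> Prop :=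
| Pconst c : Poly (fun _ => c)
| Pid : Poly (fun u => u)
| Padd p q : Poly p -> Poly q -> Poly (fun u => p u + q u)
| Pmul p q : Poly p -> Poly q -> Poly (fun u => p u * q u).

Lemma Poly_ext p q : (forall u, p u = q u) -> Poly p -> Poly q.
Proof. intros H. replace q with p; auto. apply functional_extensionality; auto. Qed.

Lemma poly_deriv p : Poly p -> exists p', Poly p' /\ forall u, derivable_pt_lim p u (p' u).
Proof.
  induction 1.
  - exists (fun _ => 0). split; [apply Pconst| intros; apply derivable_pt_lim_const].
  - exists (fun _ => 1). split; [apply Pconst| intros; apply derivable_pt_lim_id].
  - destruct IHPoly1 as [p' [Hp Hdp]], IHPoly2 as [q' [Hq Hdq]].
    exists (fun u => p' u + q' u). split; [apply Padd; auto|].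
    intros u. apply (derivable_pt_lim_plus p q); auto.
  - destruct IHPoly1 as [p' [Hp Hdp]], IHPoly2 as [q' [Hq Hdq]].
    exists (fun u => p' u * q u + p u * q' u). split; [apply Padd; apply Pmul; auto|].
    intros u. apply (derivable_pt_lim_mult p q); auto.
Qed.

Lemma poly_bound p : Poly p -> exists C m, 0 <= C /\ forall u, 1 <= u -> Rabs (p u) <= C * u ^ m.
Proof.
  induction 1.
  - exists (Rabs c), 0%nat. split; [apply Rabs_pos|]. intros; simpl; lra.
  - exists 1, 1%nat. split; [lra|]. intros u Hu; simpl. rewrite Rabs_right; lra.
  - destruct IHPoly1 as [C1 [m1 [HC1 H1]]], IHPoly2 as [C2 [m2 [HC2 H2]]].
    exists (C1 + C2), (m1 + m2)%nat. split; [lra|]. intros u Hu.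
    eapply Rle_trans; [apply Rabs_triang|].
    assert (u ^ m1 <= u ^ (m1 + m2)) by (apply Rle_pow; auto; lia).
    assert (u ^ m2 <= u ^ (m1 + m2)) by (apply Rle_pow; auto; lia).
    specialize (H1 u Hu). specialize (H2 u Hu).
    assert (C1 * u ^ m1 <= C1 * u ^ (m1 + m2)) by (apply Rmult_le_compat_l; auto).
    assert (C2 * u ^ m2 <= C2 * u ^ (m1 + m2)) by (apply Rmult_le_compat_l; auto).
    lra.
  - destruct IHPoly1 as [C1 [m1 [HC1 H1]]], IHPoly2 as [C2 [m2 [HC2 H2]]].
    exists (C1 * C2), (m1 + m2)%nat. split; [apply Rmult_le_pos; auto|]. intros u Hu.
    rewrite Rabs_mult, pow_add.
    replace (C1 * C2 * (u ^ m1 * u ^ m2)) with ((C1 * u ^ m1) * (C2 * u ^ m2)) by ring.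
    apply Rmult_le_compat; try apply Rabs_pos; auto.
Qed.

Definition Ecl (q : R -> R) (u : R) : R := if Rlt_dec 0 u then q (/ u) * exp (- / u) else 0.

Lemma exp_pow_N N y : exp (INR N * y) = exp y ^ N.
Proof.
  induction N.
  - simpl. rewrite Rmult_0_l, exp_0; auto.
  - rewrite S_INR. replace ((INR N + 1) * y) with (y + INR N * y) by ring.
    rewrite exp_plus, IHN. change (exp y ^ S N) with (exp y * exp y ^ N). auto.
Qed.

Lemma exp_ge_pow N v : (0 < N)%nat -> 0 <= v -> (v / INR N) ^ N <= exp v.
Proof.
  intros HN Hv.
  assert (HNr : 0 < INR N) by (apply lt_0_INR; auto).
  replace v with (INR N * (v / INR N)) at 2 by (field; lra).
  rewrite exp_pow_N. apply pow_incr. split.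
  - unfold Rdiv; apply Rmult_le_pos; [lra| left; apply Rinv_0_lt_compat; lra].
  - pose proof (exp_ineq1_le (v / INR N)). lra.
Qed.

Lemma Ecl_zero_lim q : Poly q -> forall eps, 0 < eps -> exists d, 0 < d /\
  forall h, 0 < h -> h < d -> Rabs (q (/ h) * exp (- / h) / h) < eps.
Proof.
  intros Hq eps Heps. destruct (poly_bound q Hq) as [C [m [HC Hb]]].
  set (N := S (S m)).
  set (K := C * INR N ^ N + 1).
  assert (HN : 0 < INR N) by (apply lt_0_INR; unfold N; lia).
  assert (HK : 0 < K) by (unfold K; pose proof (pow_le (INR N) N ltac:(lra)); nra).
  exists (Rmin 1 (eps / K)). split; [apply Rmin_pos; [lra| apply Rdiv_lt_0_compat; lra]|].
  intros h Hh Hhd.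
  assert (Hh1 : h < 1) by (eapply Rlt_le_trans; [exact Hhd| apply Rmin_l]).
  assert (Hh2 : h < eps / K) by (eapply Rlt_le_trans; [exact Hhd| apply Rmin_r]).
  set (v := / h).
  assert (Hv : 1 < v) by (unfold v; rewrite <- Rinv_1; apply Rinv_lt_contravar; lra).
  assert (Hvh : h = / v) by (unfold v; rewrite Rinv_inv; auto).
  rewrite Hvh. unfold Rdiv at 1. rewrite Rinv_inv.
  assert (Hexp : (v / INR N) ^ N <= exp v) by (apply exp_ge_pow; [unfold N; lia| lra]).
  assert (Hvm : 0 < v ^ m) by (apply pow_lt; lra).
  assert (HvN : (v / INR N) ^ N = v ^ m * v * v / INR N ^ N).
  { unfold Rdiv. rewrite Rpow_mult_distr, pow_inv. unfold N. simpl. ring. }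
  assert (HNN : 0 < INR N ^ N) by (apply pow_lt; auto).
  assert (Hpos : 0 < (v / INR N) ^ N) by (apply pow_lt; apply Rdiv_lt_0_compat; lra).
  rewrite Rabs_mult, Rabs_mult, (Rabs_right (exp _)) by (left; apply exp_pos).
  rewrite (Rabs_right v) by lra.
  rewrite exp_Ropp.
  assert (Hq1 := Hb v ltac:(lra)).
  assert (Hinv : / exp v <= / ((v / INR N) ^ N)) by (apply Rinv_le_contravar; auto).
  assert (Hstep : Rabs (q v) * / exp v * v <= C * v ^ m * / ((v / INR N) ^ N) * v).
  { apply Rmult_le_compat_r; [lra|]. apply Rmult_le_compat; auto; try apply Rabs_pos.
    left; apply Rinv_0_lt_compat, exp_pos. }
  assert (Heq : C * v ^ m * / ((v / INR N) ^ N) * v = C * INR N ^ N / v).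
  { rewrite HvN. field. repeat split; lra. }
  assert (Hfin : C * INR N ^ N / v < eps).
  { assert (C * INR N ^ N / v <= C * INR N ^ N * h).
    { rewrite Hvh. unfold Rdiv. lra. }
    assert (C * INR N ^ N * h <= K * h) by (apply Rmult_le_compat_r; unfold K; lra).
    assert (K * h < K * (eps / K)) by (apply Rmult_lt_compat_l; auto).
    replace (K * (eps / K)) with eps in H1 by (field; lra). lra. }
  lra.
Qed.

Lemma Ecl_deriv q q' : Poly q -> (forall u, derivable_pt_lim q u (q' u)) ->
  forall u, derivable_pt_lim (Ecl q) u (Ecl (fun v => v * v * (q v - q' v)) u).
Proof.
  intros Hq Hd u. destruct (Rtotal_order 0 u) as [Hpos | [H0 | Hneg]].
  - apply dpl_local with (f := fun w => q (/ w) * exp (- / w)).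
    { exists u. split; auto. intros w Hw. unfold Ecl. destruct (Rlt_dec 0 w); auto.
      exfalso. apply Rabs_def2 in Hw. lra. }
    assert (Hinv : derivable_pt_lim (fun w => / w) u (- (/ u * / u))).
    { pose proof (derivable_pt_lim_div (fun _ => 1) (fun w => w) u 0 1 (derivable_pt_lim_const 1 u)
        (derivable_pt_lim_id u) ltac:(lra)) as H.
      eapply dpl_eq'.
      - eapply dpl_ext; [|exact H]. intros w. unfold div_fct. cbv beta.
        unfold Rdiv; ring.
      - unfold Rsqr. field. lra. }
    assert (H1 : derivable_pt_lim (fun w => q (/ w)) u (q' (/ u) * - (/ u * / u))).
    { apply (derivable_pt_lim_comp (fun w => / w) q u). auto. apply Hd. }
    assert (H2 : derivable_pt_lim (fun w => exp (- / w)) u (exp (- / u) * (/ u * / u))).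
    { eapply dpl_eq'.
      - apply (derivable_pt_lim_comp (fun w => - / w) exp u).
        + apply (derivable_pt_lim_opp (fun w => / w)). exact Hinv.
        + apply derivable_pt_lim_exp.
      - ring. }
    eapply dpl_eq'.
    + apply (derivable_pt_lim_mult (fun w => q (/ w)) (fun w => exp (- / w))); [exact H1| exact H2].
    + unfold Ecl. destruct (Rlt_dec 0 u); [|lra]. ring.
  - subst u. replace (Ecl (fun v => v * v * (q v - q' v)) 0) with 0
      by (unfold Ecl; destruct (Rlt_dec 0 0); lra).
    intros eps Heps. destruct (Ecl_zero_lim q Hq eps Heps) as [d [Hd0 Hd1]].
    exists (mkposreal d Hd0). intros h Hh0 Hhd. simpl in Hhd.
    unfold Ecl. destruct (Rlt_dec 0 0); [lra|]. rewrite Rplus_0_l.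
    destruct (Rlt_dec 0 h).
    + replace ((q (/ h) * exp (- / h) - 0) / h - 0) with (q (/ h) * exp (- / h) / h) by (field; auto).
      apply Hd1; auto. apply Rabs_def2 in Hhd. lra.
    + replace ((0 - 0) / h - 0) with 0 by (field; auto). rewrite Rabs_R0; auto.
  - apply dpl_local with (f := fun _ => 0).
    { exists (- u). split; [lra|]. intros w Hw. unfold Ecl. destruct (Rlt_dec 0 w); auto.
      apply Rabs_def2 in Hw. lra. }
    replace (Ecl (fun v => v * v * (q v - q' v)) u) with 0
      by (unfold Ecl; destruct (Rlt_dec 0 u); lra).
    apply derivable_pt_lim_const.
Qed.

Lemma Ecl_Cn k : forall q, Poly q -> Cn k (Ecl q).
Proof.
  induction k; intros q Hq; simpl; auto.
  destruct (poly_deriv q Hq) as [q' [Hq' Hdq]].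
  exists (Ecl (fun v => v * v * (q v - q' v))). split.
  - apply Ecl_deriv; auto.
  - apply IHk. eapply Poly_ext; [|apply (Pmul _ _ (Pmul _ _ Pid Pid) (Padd _ _ Hq (Pmul _ _ (Pconst (-1)) Hq')))].
    intros; simpl; ring.
Qed.

Definition ee := Ecl (fun _ => 1).
Definition ee' := Ecl (fun v => v * v * (1 - 0)).

Lemma ee_deriv u : derivable_pt_lim ee u (ee' u).
Proof. apply (Ecl_deriv (fun _ => 1) (fun _ => 0)); [apply Pconst| intros; apply derivable_pt_lim_const]. Qed.

Lemma ee_Cinf : Cinf ee.
Proof. intros k. apply Ecl_Cn. apply Pconst. Qed.

Lemma ee_nonneg u : 0 <= ee u.
Proof. unfold ee, Ecl. destruct (Rlt_dec 0 u); [|lra]. pose proof (exp_pos (- / u)). lra. Qed.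
Lemma ee_pos u : 0 < u -> 0 < ee u.
Proof. intros. unfold ee, Ecl. destruct (Rlt_dec 0 u); [|lra]. pose proof (exp_pos (- / u)). lra. Qed.
Lemma ee_zero u : u <= 0 -> ee u = 0.
Proof. intros. unfold ee, Ecl. destruct (Rlt_dec 0 u); lra. Qed.
Lemma ee'_nonneg u : 0 <= ee' u.
Proof.
  unfold ee', Ecl. destruct (Rlt_dec 0 u); [|lra]. pose proof (exp_pos (- / u)).
  assert (0 < / u) by (apply Rinv_0_lt_compat; auto).
  replace (/ u * / u * (1 - 0)) with (/ u * / u) by ring.
  apply Rmult_le_pos; [apply Rmult_le_pos|]; lra.
Qed.
Lemma ee'_zero u : u <= 0 -> ee' u = 0.
Proof. intros. unfold ee', Ecl. destruct (Rlt_dec 0 u); lra. Qed.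

Definition Den u := ee u + ee (1 - u).
Lemma Den_pos u : 0 < Den u.
Proof.
  unfold Den. destruct (Rlt_dec 0 u).
  - pose proof (ee_pos u r). pose proof (ee_nonneg (1 - u)). lra.
  - pose proof (ee_pos (1 - u) ltac:(lra)). pose proof (ee_nonneg u). lra.
Qed.

Definition Ssm u := ee u / Den u.
Definition Sd u := (ee' u * ee (1 - u) + ee u * ee' (1 - u)) / (Den u * Den u).

Lemma ee1_deriv u : derivable_pt_lim (fun w => ee (1 - w)) u (- ee' (1 - u)).
Proof.
  eapply dpl_eq'.
  - eapply dpl_ext; [|apply (derivable_pt_lim_comp (fun w => -1 * w + 1) ee u (-1))].
    + intros w. unfold comp. f_equal. ring.
    + apply dpl_affine_gen.
    + replace (-1 * u + 1) with (1 - u) by ring. apply ee_deriv.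
  - ring.
Qed.

Lemma Ssm_deriv u : derivable_pt_lim Ssm u (Sd u).
Proof.
  pose proof (Den_pos u) as HD.
  eapply dpl_eq'.
  - apply (derivable_pt_lim_div ee Den u (ee' u) (ee' u + - ee' (1 - u))).
    + apply ee_deriv.
    + apply (derivable_pt_lim_plus ee (fun w => ee (1 - w))); [apply ee_deriv| apply ee1_deriv].
    + lra.
  - unfold Sd, Rsqr. f_equal. unfold Den. ring.
Qed.

Lemma Ssm_Cinf : Cinf Ssm.
Proof.
  intros k. unfold Ssm, Rdiv. apply Cn_mult; [apply ee_Cinf|].
  apply Cn_inv; [|intros t; pose proof (Den_pos t); lra].
  unfold Den. apply Cn_plus; [apply ee_Cinf|].
  apply (Cn_ext k (fun t => ee (-1 * t + 1))); [intros; f_equal; ring|].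
  apply Cn_affine. apply ee_Cinf.
Qed.

Lemma Sd_nonneg u : 0 <= Sd u.
Proof.
  unfold Sd. pose proof (Den_pos u).
  apply Rmult_le_pos; [|left; apply Rinv_0_lt_compat; nra].
  pose proof (ee_nonneg u). pose proof (ee_nonneg (1-u)). pose proof (ee'_nonneg u). pose proof (ee'_nonneg (1-u)).
  apply Rplus_le_le_0_compat; apply Rmult_le_pos; auto.
Qed.

Lemma Sd_zero u : u <= 0 \/ 1 <= u -> Sd u = 0.
Proof.
  intros [H|H]; unfold Sd.
  - rewrite (ee_zero u H), (ee'_zero u H). unfold Rdiv. ring.
  - rewrite (ee_zero (1 - u)), (ee'_zero (1 - u)) by lra. unfold Rdiv. ring.
Qed.

Lemma Ssm_0 u : u <= 0 -> Ssm u = 0.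
Proof. intros. unfold Ssm. rewrite ee_zero by auto. unfold Rdiv; ring. Qed.

Lemma Ssm_1 u : 1 <= u -> Ssm u = 1.
Proof.
  intros. unfold Ssm, Den. rewrite (ee_zero (1 - u)) by lra.
  pose proof (ee_pos u ltac:(lra)). field. lra.
Qed.

Lemma Sd_cont u : continuity_pt Sd u.
Proof.
  destruct (Ssm_Cinf 2%nat) as [f' [Hf' [f'' [Hf'' _]]]].
  assert (E : f' = Sd).
  { apply functional_extensionality; intro w. eapply dpl_unique; [apply Hf'| apply Ssm_deriv]. }
  rewrite <- E. eapply dpl_cont. apply Hf''.
Qed.

Lemma RInt_ext_R (f g : R -> R) a b : (forall x, Rmin a b < x < Rmax a b -> f x = g x) ->
  RInt f a b = RInt g a b.
Proof. apply RInt_ext. Qed.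

Definition kern s0 d s := / d * Sd ((s - s0) / d).

Lemma Ssm_aff_deriv s0 d s : 0 < d ->
  derivable_pt_lim (fun u => Ssm ((u - s0) / d)) s (kern s0 d s).
Proof.
  intros Hd. eapply dpl_eq'.
  - eapply dpl_ext; [|apply (derivable_pt_lim_comp (fun u => / d * u + - s0 / d) Ssm s (/ d))].
    + intros u. unfold comp. cbv beta. f_equal. field. lra.
    + apply dpl_affine_gen.
    + apply Ssm_deriv.
  - unfold kern. replace (/ d * s + - s0 / d) with ((s - s0) / d) by (field; lra). ring.
Qed.

Lemma kern_cont s0 d s : 0 < d -> continuity_pt (kern s0 d) s.
Proof.
  intros Hd. unfold kern.
  apply (continuity_pt_mult (fun _ => / d) (fun u => Sd ((u - s0) / d))).
  - apply continuity_pt_const. intros x y; auto.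
  - apply (continuity_pt_comp (fun u => (u - s0) / d) Sd).
    + eapply dpl_cont. eapply dpl_ext; [|apply (dpl_affine_gen (/ d) (- s0 / d) s)].
      intros u. cbv beta. field. lra.
    + apply Sd_cont.
Qed.

Lemma kern_nonneg s0 d s : 0 < d -> 0 <= kern s0 d s.
Proof. intros. unfold kern. apply Rmult_le_pos; [left; apply Rinv_0_lt_compat; auto| apply Sd_nonneg]. Qed.

Lemma kern_zero s0 d s : 0 < d -> (s <= s0 \/ s0 + d <= s) -> kern s0 d s = 0.
Proof.
  intros Hd Hs. unfold kern. rewrite Sd_zero; [ring|].
  destruct Hs as [H|H].
  - left. unfold Rdiv. apply Rmult_le_0_r; [lra| left; apply Rinv_0_lt_compat; auto].
  - right. apply (Rmult_le_reg_r d); [auto|]. unfold Rdiv. rewrite Rmult_assoc, Rinv_l; lra.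
Qed.

Lemma ex_RInt_cont (f : R -> R) a b : a <= b -> (forall s, a <= s <= b -> continuity_pt f s) -> ex_RInt f a b.
Proof.
  intros Hab H. apply (ex_RInt_continuous (V := R_CompleteNormedModule)).
  rewrite Rmin_left, Rmax_right by lra. intros z Hz. apply cont_continuous. auto.
Qed.

Section FL.
Variables a b : R.
Hypothesis Hab : a < b.
Variable C : R -> R.
Hypothesis HC : forall s, a <= s <= b -> continuity_pt C s.

Lemma kern_int s0 d : 0 < d -> a <= s0 -> s0 + d <= b -> RInt (kern s0 d) a b = 1.
Proof.
  intros Hd Ha Hb.
  rewrite (is_RInt_unique (kern s0 d) a b (minus (Ssm ((b - s0) / d)) (Ssm ((a - s0) / d)))).
  - unfold minus, plus, opp; simpl. rewrite Ssm_1, Ssm_0.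
    + ring.
    + unfold Rdiv. apply Rmult_le_0_r; [lra| left; apply Rinv_0_lt_compat; auto].
    + apply (Rmult_le_reg_r d); [auto|]. unfold Rdiv. rewrite Rmult_assoc, Rinv_l; lra.
  - apply (is_RInt_derive (V := R_CompleteNormedModule) (fun u => Ssm ((u - s0) / d))).
    + intros z Hz. apply is_derive_Reals. apply Ssm_aff_deriv; auto.
    + intros z Hz. apply cont_continuous. apply kern_cont; auto.
Qed.

Lemma exCk s0 d : 0 < d -> ex_RInt (fun s => C s * kern s0 d s) a b.
Proof.
  intros Hd. apply ex_RInt_cont; [lra|]. intros s Hs.
  apply (continuity_pt_mult C (kern s0 d)); [apply HC; auto| apply kern_cont; auto].
Qed.

Lemma kern_approx s0 d eps : 0 < d -> a <= s0 -> s0 + d <= b ->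
  (forall s, s0 <= s <= s0 + d -> Rabs (C s - C s0) <= eps) ->
  Rabs (RInt (fun s => C s * kern s0 d s) a b - C s0) <= eps.
Proof.
  intros Hd Ha Hb Heps.
  assert (Hk : ex_RInt (kern s0 d) a b) by (apply ex_RInt_cont; [lra| intros; apply kern_cont; auto]).
  assert (E : RInt (fun s => C s * kern s0 d s) a b - C s0 =
              RInt (fun s => (C s - C s0) * kern s0 d s) a b).
  { rewrite (RInt_ext_R (fun s => (C s - C s0) * kern s0 d s) (fun s => C s * kern s0 d s - C s0 * kern s0 d s))
      by (intros; ring).
    rewrite RInt_minus_R; [| apply exCk; auto| apply ex_RInt_scal_R; auto].
    rewrite RInt_scal_R by auto. rewrite kern_int; auto. ring. }
  rewrite E.
  assert (Hg : ex_RInt (fun s => (C s - C s0) * kern s0 d s) a b).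
  { apply ex_RInt_cont; [lra|]. intros s Hs.
    apply (continuity_pt_mult (fun s => C s - C s0) (kern s0 d)); [|apply kern_cont; auto].
    apply (continuity_pt_minus C (fun _ => C s0)); [apply HC; auto| apply continuity_pt_const; intros x y; auto]. }
  eapply Rle_trans; [apply abs_RInt_le; [lra| auto]|].
  eapply Rle_trans.
  - apply (RInt_le (fun s => Rabs ((C s - C s0) * kern s0 d s)) (fun s => eps * kern s0 d s) a b); [lra| | |].
    + apply (ex_RInt_norm (fun s => (C s - C s0) * kern s0 d s)); auto.
    + apply ex_RInt_scal_R; auto.
    + intros s Hs. rewrite Rabs_mult, (Rabs_right (kern s0 d s)) by (apply Rle_ge, kern_nonneg; auto).
      destruct (Rle_dec s s0) as [H1|H1].
      * rewrite kern_zero by (auto; lra). lra.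
      * destruct (Rle_dec (s0 + d) s) as [H2|H2].
        -- rewrite kern_zero by (auto; lra). lra.
        -- apply Rmult_le_compat_r; [apply kern_nonneg; auto| apply Heps; lra].
  - rewrite RInt_scal_R by auto. rewrite kern_int; auto. lra.
Qed.

Lemma small_zero x : (forall eps, 0 < eps -> Rabs x <= eps) -> x = 0.
Proof.
  intros H. destruct (Req_dec x 0) as [|Hne]; auto.
  exfalso. pose proof (Rabs_pos_lt x Hne). specialize (H (Rabs x / 2) ltac:(lra)). lra.
Qed.

Hypothesis HFL : forall s1 s2 d, 0 < d -> a < s1 -> s1 + d < s2 -> s2 + d < b ->
  RInt (fun s => C s * (kern s1 d s - kern s2 d s)) a b = 0.

Lemma FL_inner s1 s2 : a < s1 -> s1 < s2 -> s2 < b -> C s1 = C s2.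
Proof.
  intros H1 H12 H2.
  apply Rminus_diag_uniq. apply small_zero. intros eps Heps.
  destruct (cont_pt_eps C s1 (HC s1 ltac:(lra)) (eps / 2) ltac:(lra)) as [d1 [Hd1 Hc1]].
  destruct (cont_pt_eps C s2 (HC s2 ltac:(lra)) (eps / 2) ltac:(lra)) as [d2 [Hd2 Hc2]].
  set (d := Rmin (Rmin (d1 / 2) (d2 / 2)) (Rmin ((s2 - s1) / 2) ((b - s2) / 2))).
  assert (Hd : 0 < d) by (unfold d; repeat apply Rmin_pos; lra).
  assert (Hda : d <= d1 / 2) by (unfold d; eapply Rle_trans; apply Rmin_l).
  assert (Hdb : d <= d2 / 2) by (unfold d; eapply Rle_trans; [apply Rmin_l| apply Rmin_r]).
  assert (Hdc : d <= (s2 - s1) / 2) by (unfold d; eapply Rle_trans; [apply Rmin_r| apply Rmin_l]).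
  assert (Hdd : d <= (b - s2) / 2) by (unfold d; eapply Rle_trans; [apply Rmin_r| apply Rmin_r]).
  assert (A1 := kern_approx s1 d (eps / 2) Hd ltac:(lra) ltac:(lra)).
  assert (A2 := kern_approx s2 d (eps / 2) Hd ltac:(lra) ltac:(lra)).
  assert (B1 : Rabs (RInt (fun s => C s * kern s1 d s) a b - C s1) <= eps / 2).
  { apply A1. intros s Hs. left. apply Hc1. apply Rabs_def1; lra. }
  assert (B2 : Rabs (RInt (fun s => C s * kern s2 d s) a b - C s2) <= eps / 2).
  { apply A2. intros s Hs. left. apply Hc2. apply Rabs_def1; lra. }
  assert (E : RInt (fun s => C s * kern s1 d s) a b - RInt (fun s => C s * kern s2 d s) a b = 0).
  { rewrite <- RInt_minus_R by (apply exCk; auto).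
    rewrite <- (HFL s1 s2 d) by lra. apply RInt_ext_R. intros; ring. }
  replace (C s1 - C s2) with ((C s1 - RInt (fun s => C s * kern s1 d s) a b)
     + (RInt (fun s => C s * kern s2 d s) a b - C s2)) by lra.
  eapply Rle_trans; [apply Rabs_triang|].
  rewrite <- Rabs_Ropp with (x := C s1 - _). replace (- (C s1 - RInt (fun s => C s * kern s1 d s) a b))
    with (RInt (fun s => C s * kern s1 d s) a b - C s1) by ring.
  lra.
Qed.

Lemma FL_const s : a <= s <= b -> C s = C a.
Proof.
  set (m := (a + b) / 2).
  assert (Hm : a < m < b) by (unfold m; lra).
  assert (Hin : forall s, a < s < b -> C s = C m).
  { intros s' Hs'. destruct (Rtotal_order s' m) as [Hl|[He|Hg]].
    - apply FL_inner; lra.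
    - subst; auto.
    - symmetry. apply FL_inner; lra. }
  assert (Ha : C a = C m).
  { apply Rminus_diag_uniq. apply small_zero. intros eps Heps.
    destruct (cont_pt_eps C a (HC a ltac:(lra)) eps Heps) as [d [Hd Hc]].
    set (s' := a + Rmin (d / 2) ((m - a) / 2)).
    assert (0 < Rmin (d / 2) ((m - a) / 2)) by (apply Rmin_pos; lra).
    assert (Rmin (d / 2) ((m - a) / 2) <= d / 2) by apply Rmin_l.
    assert (Rmin (d / 2) ((m - a) / 2) <= (m - a) / 2) by apply Rmin_r.
    rewrite <- (Hin s') by (unfold s'; lra).
    rewrite <- Rabs_Ropp. replace (- (C a - C s')) with (C s' - C a) by ring.
    left. apply Hc. unfold s'. apply Rabs_def1; lra. }
  assert (Hb : C b = C m).
  { apply Rminus_diag_uniq. apply small_zero. intros eps Heps.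
    destruct (cont_pt_eps C b (HC b ltac:(lra)) eps Heps) as [d [Hd Hc]].
    set (s' := b - Rmin (d / 2) ((b - m) / 2)).
    assert (0 < Rmin (d / 2) ((b - m) / 2)) by (apply Rmin_pos; lra).
    assert (Rmin (d / 2) ((b - m) / 2) <= d / 2) by apply Rmin_l.
    assert (Rmin (d / 2) ((b - m) / 2) <= (b - m) / 2) by apply Rmin_r.
    rewrite <- (Hin s') by (unfold s'; lra).
    rewrite <- Rabs_Ropp. replace (- (C b - C s')) with (C s' - C b) by ring.
    left. apply Hc. unfold s'. apply Rabs_def1; lra. }
  intros Hs. rewrite Ha.
  destruct (Rle_lt_or_eq_dec a s (proj1 Hs)) as [Has|Has]; [|subst; auto].
  destruct (Rle_lt_or_eq_dec s b (proj2 Hs)) as [Hsb|Hsb]; [|subst; auto].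
  apply Hin; lra.
Qed.
End FL.

Definition Cf n F x s k := Pdf n F x s k
   - / 2 * rsum n (fun j => rsum n (fun l => dg n F l k j (vel x s) * acc x s l * acc x s j)).

Lemma W_eq_C n F x s k : Minkowski n F -> ND n (vel x s) -> (k < n)%nat -> Wf n F x s k = Cf n F x s k.
Proof.
  intros HM HND Hk. unfold Wf, Cf, Pdf, Dtau.
  rewrite (rsum_ext n (fun j => gten n F k j (vel x s) * (jerk x s j + _))
      (fun j => gten n F k j (vel x s) * jerk x s j + gten n F k j (vel x s) *
         rsum n (fun h => rsum n (fun l => (/ 2 * rsum n (fun m => ginv n F j m (vel x s) * dg n F l m h (vel x s)))
            * acc x s h * acc x s l)))) by (intros; unfold Cart, dg; ring).
  rewrite rsum_plus.
  rewrite (alg_H1 n (fun i j => gten n F i j (vel x s)) (fun l i j => dg n F l i j (vel x s))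
     (fun i j => ginv n F i j (vel x s)) (acc x s)
     (fun k m Hk Hm => ginv_right n F HM k m (vel x s) Hk Hm HND) k Hk).
  rewrite (rsum_ext n (fun j => rsum n (fun l => dg n F l k j (vel x s) * acc x s l) * acc x s j
      + gten n F k j (vel x s) * jerk x s j)
     (fun j => rsum n (fun l => dg n F l k j (vel x s) * acc x s l * acc x s j)
      + gten n F k j (vel x s) * jerk x s j)) by (intros; rewrite <- rsum_scalr; auto).
  rewrite rsum_plus.
  assert (E : rsum n (fun h => rsum n (fun l => dg n F l k h (vel x s) * acc x s h * acc x s l)) =
              rsum n (fun j => rsum n (fun l => dg n F l k j (vel x s) * acc x s l * acc x s j))).
  { apply rsum_ext; intros; apply rsum_ext; intros; ring. }
  rewrite E. field.
Qed.

Section Main.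
Variable n : nat.
Variable F : (nat -> R) -> R.
Variables a b : R.
Variable x : R -> nat -> R.
Hypothesis HM : Minkowski n F.
Hypothesis Hab : a < b.
Hypothesis Hx : smooth_curve n x.
Hypothesis Hus : unit_speed n F a b x.

Lemma cCf k s : (k < n)%nat -> ND n (vel x s) -> continuity_pt (fun u => Cf n F x u k) s.
Proof.
  intros Hk HND. unfold Cf, Pdf.
  assert (Cg : forall i j, (i < n)%nat -> (j < n)%nat -> continuity_pt (fun u => gten n F i j (vel x u)) s).
  { intros i j Hi Hj. apply (c1_comp n (ND n)); auto.
    - apply (Ck_cont n 0). apply gten_Ck; auto.
    - intros; apply (cvel n); auto. }
  assert (Cd : forall l i j, (l < n)%nat -> (i < n)%nat -> (j < n)%nat -> continuity_pt (fun u => dg n F l i j (vel x u)) s).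
  { intros l i j Hl Hi Hj. apply (c1_comp n (ND n)); auto.
    - apply (Ck_cont n 0). apply (Ck_pderiv n 0); auto. apply gten_Ck; auto.
    - intros; apply (cvel n); auto. }
  apply (continuity_pt_minus (fun u => rsum n _) (fun u => / 2 * rsum n _)).
  - apply cont_rsum; intros j Hj.
    apply (continuity_pt_plus (fun u => _ * acc x u j) (fun u => _ * jerk x u j)).
    + apply (continuity_pt_mult _ (fun u => acc x u j)); [|apply (cacc n); auto].
      apply cont_rsum; intros l Hl.
      apply (continuity_pt_mult _ (fun u => acc x u l)); [apply Cd; auto|apply (cacc n); auto].
    + apply (continuity_pt_mult _ (fun u => jerk x u j)); [apply Cg; auto|apply (cjerk n); auto].
  - apply (continuity_pt_mult (fun _ => / 2) (fun u => rsum n _)); [apply continuity_pt_const; intros p q; auto|].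
    apply cont_rsum; intros j Hj. apply cont_rsum; intros l Hl.
    apply (continuity_pt_mult (fun u => _ * acc x u l) (fun u => acc x u j)); [|apply (cacc n); auto].
    apply (continuity_pt_mult _ (fun u => acc x u l)); [apply Cd; auto|apply (cacc n); auto].
Qed.

Definition sigf s1 s2 d s := Ssm ((s - s1) / d) - Ssm ((s - s2) / d).
Definition Vk k s1 s2 d := fun s i => if Nat.eqb i k then sigf s1 s2 d s else 0.

Lemma sig_Cinf s1 s2 d : 0 < d -> Cinf (sigf s1 s2 d).
Proof.
  intros Hd k. unfold sigf.
  apply (Cn_ext k (fun s => Ssm (/ d * s + - s1 / d) + -1 * Ssm (/ d * s + - s2 / d))).
  { intros t. replace (/ d * t + - s1 / d) with ((t - s1) / d) by (field; lra).
    replace (/ d * t + - s2 / d) with ((t - s2) / d) by (field; lra). ring. }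
  apply Cn_plus; [apply Cn_affine; apply Ssm_Cinf|].
  apply Cn_mult; [apply Cn_const| apply Cn_affine; apply Ssm_Cinf].
Qed.

Lemma sig_deriv s1 s2 d s : 0 < d -> derivable_pt_lim (sigf s1 s2 d) s (kern s1 d s - kern s2 d s).
Proof.
  intros Hd. unfold sigf.
  apply (derivable_pt_lim_minus (fun u => Ssm ((u - s1) / d)) (fun u => Ssm ((u - s2) / d)));
  apply Ssm_aff_deriv; auto.
Qed.

Lemma Vk_smooth k s1 s2 d : 0 < d -> smooth_curve n (Vk k s1 s2 d).
Proof.
  intros Hd i Hi. unfold Vk. destruct (Nat.eqb i k).
  - apply Cinf_smooth1. apply sig_Cinf; auto.
  - apply Cinf_smooth1. intros m. apply Cn_const.
Qed.

Lemma Vk_vel k s1 s2 d s i : 0 < d ->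
  vel (Vk k s1 s2 d) s i = if Nat.eqb i k then kern s1 d s - kern s2 d s else 0.
Proof.
  intros Hd. unfold vel, Vk. destruct (Nat.eqb i k).
  - apply deriv_eq. apply sig_deriv; auto.
  - apply deriv_eq. apply derivable_pt_lim_const.
Qed.

Lemma main_fwd : biharmonic n F a b x ->
  exists lam : nat -> R, forall s, a <= s <= b -> forall i, (i < n)%nat ->
     rsum n (fun j => gten n F i j (vel x s) * Dtau n F x s j) = lam i.
Proof.
  intros Hbi. exists (fun i => Wf n F x a i). intros s Hs k Hk.
  change (Wf n F x s k = Wf n F x a k).
  assert (HND : forall s, a <= s <= b -> ND n (vel x s)) by (intros; apply (Y_ND n F a b x HM Hus); auto).
  rewrite !W_eq_C by (auto; apply HND; lra).
  apply (FL_const a b Hab (fun u => Cf n F x u k)); auto.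
  - intros u Hu. apply cCf; auto.
  - intros s1 s2 d Hd H1 H12 H2.
    set (V := Vk k s1 s2 d).
    assert (HV : smooth_curve n V) by (apply Vk_smooth; auto).
    assert (Hsa : forall i, vel V a i = 0).
    { intros i. unfold V. rewrite Vk_vel by auto. destruct (Nat.eqb i k); auto.
      rewrite !kern_zero by (auto; lra). ring. }
    assert (Hsb : forall i, vel V b i = 0).
    { intros i. unfold V. rewrite Vk_vel by auto. destruct (Nat.eqb i k); auto.
      rewrite !kern_zero by (auto; lra). ring. }
    assert (Hd0 := Hbi V HV).
    assert (Hd1 : derivable_pt_lim (fun t => E2 n F a b (fun s i => x s i + t * V s i)) 0 0).
    { apply Hd0. intros i Hi. unfold V, Vk. repeat split.
      - destruct (Nat.eqb i k); auto. unfold sigf. rewrite !Ssm_0; [ring| |];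
        unfold Rdiv; apply Rmult_le_0_r; try lra; left; apply Rinv_0_lt_compat; lra.
      - destruct (Nat.eqb i k); auto. unfold sigf. rewrite !Ssm_1; [ring| |];
        apply (Rmult_le_reg_r d); auto; unfold Rdiv; rewrite Rmult_assoc, Rinv_l; lra.
      - apply (Hsa i).
      - apply (Hsb i). }
    assert (Hd2 := first_var n F a b x HM Hab Hx Hus V HV).
    assert (E1 := dpl_unique _ _ _ _ Hd1 Hd2).
    rewrite (var_formula n F a b x HM Hab Hx Hus V HV) in E1 by (intros; split; auto).
    assert (E2 : RInt (fun s => rsum n (fun i => Wf n F x s i * vel V s i)) a b = 0) by lra.
    rewrite <- E2. apply RInt_ext_R. rewrite Rmin_left, Rmax_right by lra. intros z Hz.
    unfold V. rewrite (rsum_ext n _ (fun i => (if Nat.eqb i k then kern s1 d z - kern s2 d z else 0) * Wf n F x z i)).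
    2: { intros i Hi. rewrite Vk_vel by auto. ring. }
    rewrite rsum_single by auto. rewrite W_eq_C by (auto; apply HND; lra). ring.
Qed.

Lemma main_bwd : (exists lam : nat -> R, forall s, a <= s <= b -> forall i, (i < n)%nat ->
     rsum n (fun j => gten n F i j (vel x s) * Dtau n F x s j) = lam i) ->
  biharmonic n F a b x.
Proof.
  intros [lam Hlam] V HV Hend.
  assert (Hd2 := first_var n F a b x HM Hab Hx Hus V HV).
  rewrite (var_formula n F a b x HM Hab Hx Hus V HV) in Hd2.
  2: { intros i Hi. destruct (Hend i Hi) as [_ [_ [H1 H2]]]. split; auto. }
  eapply dpl_eq'; [exact Hd2|].
  assert (E : RInt (fun s => rsum n (fun k => Wf n F x s k * vel V s k)) a b =
              RInt (fun s => rsum n (fun k => lam k * vel V s k)) a b).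
  { apply RInt_ext_R. rewrite Rmin_left, Rmax_right by lra. intros z Hz.
    apply rsum_ext. intros k Hk. unfold Wf. rewrite Hlam; auto; lra. }
  rewrite E.
  rewrite (is_RInt_unique (fun s => rsum n (fun k => lam k * vel V s k)) a b
            (minus (rsum n (fun k => lam k * V b k)) (rsum n (fun k => lam k * V a k)))).
  - unfold minus, plus, opp; simpl.
    rewrite (rsum_ext n (fun k => lam k * V b k) (fun _ => 0)).
    2: { intros k Hk. destruct (Hend k Hk) as [_ [H _]]. rewrite H. ring. }
    rewrite (rsum_ext n (fun k => lam k * V a k) (fun _ => 0)).
    2: { intros k Hk. destruct (Hend k Hk) as [H _]. rewrite H. ring. }
    rewrite rsum_zero. ring.
  - apply (is_RInt_derive (V := R_CompleteNormedModule) (fun s => rsum n (fun k => lam k * V s k))).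
    + intros z Hz. apply is_derive_Reals. apply dpl_rsum. intros k Hk.
      apply (derivable_pt_lim_scal (fun s => V s k)). apply (dx n); auto.
    + intros z Hz. apply cont_continuous. apply cont_rsum. intros k Hk.
      apply (continuity_pt_mult (fun _ => lam k) (fun s => vel V s k)).
      * apply continuity_pt_const. intros p q; auto.
      * apply (cvel n); auto.
Qed.
End Main.

Theorem mainTheorem7 (n : nat) (F : (nat -> R) -> R) (a b : R) (x : R -> nat -> R) :
  (0 < n)%nat -> Minkowski n F -> a < b ->
  smooth_curve n x -> unit_speed n F a b x ->
  (biharmonic n F a b x <->
   exists lam : nat -> R, forall s, a <= s <= b -> forall i, (i < n)%nat ->
     rsum n (fun j => gten n F i j (vel x s) * Dtau n F x s j) = lam i).
Proof.
  intros _ HM Hab Hx Hus. split.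
  - apply main_fwd; auto.
  - apply main_bwd; auto.
Qed.
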